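(* Let $\alpha>0$, $d>0$ and $\beta\ge 1$. For every $(\theta_0,W_0)\in\Omega_\beta$ the system $$\dot\theta=F_1(\theta,W),\qquad \dot W=F_2(\theta,W),\qquad (\theta(0),W(0))=(\theta_0,W_0)$$ has a unique solution $(\theta,W)\in C^1(\mathbb{R})\times C^1(\mathbb{R})$ defined for all $t\in\mathbb{R}$ and taking values in $\Omega_\beta$.
   Context: Fix parameters $\alpha>0$, $d>0$, $\beta\ge1$. Let $\theta_\beta=\arctan(\beta^{-1/2})\in(0,\pi/2)$, the unique $\theta\in(0,\pi/2)$ with $\beta^{1/2}\sin\theta-\cos\theta=0$. Let $\Omega_\beta=\{(\theta,W)\in\mathbb{R}^2:\ 0<\theta<\pi/2,\ W\in\mathbb{R},\ (\theta,W)\neq(\theta_\beta,0)\}$. Put $D_\beta(\theta,W)=\frac{d^2}{\beta}(\beta^{1/2}\sin\theta-\cos\theta)^2+W^2$ (positive on $\Omega_\beta$) and $$F_1(\theta,W)=\frac{\alpha\beta^{1/2}W}{D_\beta(\theta,W)^{3/2}},\qquad F_2(\theta,W)=\frac{\beta^{3/2}\sin\theta-\cos\theta}{d\sin\theta\cos\theta}-\frac{\alpha d^2(\sin\theta+\beta^{1/2}\cos\theta)(\beta^{1/2}\sin\theta-\cos\theta)}{\beta^{1/2}D_\beta(\theta,W)^{3/2}}.$$ (This system describes two coaxial circular vortex filaments of radii $R_1=d\beta^{-1/2}\cos\theta$, $R_2=d\sin\theta$ and axial separation $W$.) *)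

(* Defs.v *)
From Stdlib Require Import Reals.
Open Scope R_scope.

Definition theta_beta (beta : R) : R := atan (/ sqrt beta).

Definition in_Omega (beta th W : R) : Prop :=
  0 < th /\ th < PI / 2 /\ ~ (th = theta_beta beta /\ W = 0).

Definition D_beta (d beta th W : R) : R :=
  (d ^ 2 / beta) * (sqrt beta * sin th - cos th) ^ 2 + W ^ 2.

Definition D32 (d beta th W : R) : R := D_beta d beta th W * sqrt (D_beta d beta th W).

Definition F1 (alpha d beta th W : R) : R :=
  alpha * sqrt beta * W / D32 d beta th W.

Definition F2 (alpha d beta th W : R) : R :=
  (beta * sqrt beta * sin th - cos th) / (d * sin th * cos th)
  - alpha * d ^ 2 * (sin th + sqrt beta * cos th) * (sqrt beta * sin th - cos th)
      / (sqrt beta * D32 d beta th W).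

Definition C1 (f : R -> R) : Prop :=
  exists f' : R -> R, (forall t, derivable_pt_lim f t (f' t)) /\ continuity f'.

Definition is_global_solution (alpha d beta th0 W0 : R) (th W : R -> R) : Prop :=
  C1 th /\ C1 W /\
  (forall t, in_Omega beta (th t) (W t)) /\
  th 0 = th0 /\ W 0 = W0 /\
  (forall t, derivable_pt_lim th t (F1 alpha d beta (th t) (W t))) /\
  (forall t, derivable_pt_lim W t (F2 alpha d beta (th t) (W t))).

(* Main.v *)
Require Import Defs.
From Stdlib Require Import Reals Lra Psatz Classical Arith.
From Coquelicot Require Import Coquelicot.
Open Scope R_scope.

Definition LLip (f : R -> R -> R) : Prop :=
  forall Rb, 0 <= Rb -> exists L B, 0 <= L /\ forall a b a' b',
    Rabs b <= Rb -> Rabs b' <= Rb ->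
    Rabs (f a b) <= B /\ Rabs (f a b - f a' b') <= L * (Rabs (a - a') + Rabs (b - b')).

Lemma LLip_const c : LLip (fun _ _ => c).
Proof.
  intros Rb _. exists 0, (Rabs c). split; [lra|]. intros. split; [lra|].
  replace (c - c) with 0 by ring. rewrite Rabs_R0.
  assert (0 <= Rabs (a - a')) by apply Rabs_pos. assert (0 <= Rabs (b - b')) by apply Rabs_pos. nra.
Qed.

Lemma LLip_snd : LLip (fun _ b => b).
Proof.
  intros Rb HR. exists 1, Rb. split; [lra|]. intros. split; [lra|].
  assert (0 <= Rabs (a - a')) by apply Rabs_pos. lra.
Qed.

Lemma Lip1_fun (g g' : R -> R) : (forall x, derivable_pt_lim g x (g' x)) ->
  (forall x, Rabs (g' x) <= 1) -> forall x y, Rabs (g x - g y) <= Rabs (x - y).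
Proof.
  intros Hd Hb x y.
  destruct (MVT_abs g g' y x) as [c [Hc _]]. { intros; apply Hd. }
  rewrite Hc. specialize (Hb c). assert (0 <= Rabs (x - y)) by apply Rabs_pos. nra.
Qed.

Lemma sin_lip x y : Rabs (sin x - sin y) <= Rabs (x - y).
Proof.
  apply (Lip1_fun sin cos). intro; apply derivable_pt_lim_sin.
  intro. apply Rabs_le. pose proof (COS_bound x0). lra.
Qed.

Lemma cos_lip x y : Rabs (cos x - cos y) <= Rabs (x - y).
Proof.
  apply (Lip1_fun cos (fun x => - sin x)). intro; apply derivable_pt_lim_cos.
  intro. rewrite Rabs_Ropp. apply Rabs_le. pose proof (SIN_bound x0). lra.
Qed.

Lemma LLip_sin : LLip (fun a _ => sin a).
Proof.
  intros Rb _. exists 1, 1. split; [lra|]. intros. split.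
  - apply Rabs_le. pose proof (SIN_bound a). lra.
  - pose proof (sin_lip a a'). assert (0 <= Rabs (b - b')) by apply Rabs_pos. lra.
Qed.

Lemma LLip_cos : LLip (fun a _ => cos a).
Proof.
  intros Rb _. exists 1, 1. split; [lra|]. intros. split.
  - apply Rabs_le. pose proof (COS_bound a). lra.
  - pose proof (cos_lip a a'). assert (0 <= Rabs (b - b')) by apply Rabs_pos. lra.
Qed.

Lemma LLip_plus f g : LLip f -> LLip g -> LLip (fun a b => f a b + g a b).
Proof.
  intros Hf Hg Rb HR. destruct (Hf Rb HR) as [L1 [B1 [HL1 H1]]].
  destruct (Hg Rb HR) as [L2 [B2 [HL2 H2]]]. exists (L1 + L2), (B1 + B2). split; [lra|].
  intros a b a' b' Hb Hb'. destruct (H1 a b a' b' Hb Hb') as [A1 A2].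
  destruct (H2 a b a' b' Hb Hb') as [C1 C2]. split.
  - eapply Rle_trans; [apply Rabs_triang|lra].
  - replace (f a b + g a b - (f a' b' + g a' b')) with ((f a b - f a' b') + (g a b - g a' b')) by ring.
    eapply Rle_trans; [apply Rabs_triang|lra].
Qed.

Lemma LLip_opp f : LLip f -> LLip (fun a b => - f a b).
Proof.
  intros Hf Rb HR. destruct (Hf Rb HR) as [L1 [B1 [HL1 H1]]]. exists L1, B1. split; [lra|].
  intros a b a' b' Hb Hb'. destruct (H1 a b a' b' Hb Hb') as [A1 A2]. split.
  - rewrite Rabs_Ropp; lra.
  - replace (- f a b - - f a' b') with (- (f a b - f a' b')) by ring. rewrite Rabs_Ropp; lra.
Qed.

Lemma LLip_minus f g : LLip f -> LLip g -> LLip (fun a b => f a b - g a b).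
Proof. intros. apply (LLip_plus f (fun a b => - g a b)); auto. apply LLip_opp; auto. Qed.

Lemma LLip_mult f g : LLip f -> LLip g -> LLip (fun a b => f a b * g a b).
Proof.
  intros Hf Hg Rb HR. destruct (Hf Rb HR) as [L1 [B1 [HL1 H1]]].
  destruct (Hg Rb HR) as [L2 [B2 [HL2 H2]]].
  assert (HB1 : 0 <= Rabs B1).  apply Rabs_pos.
  assert (HB2 : 0 <= Rabs B2).  apply Rabs_pos.
  exists (Rabs B1 * L2 + Rabs B2 * L1), (B1 * B2). split; [nra|].
  intros a b a' b' Hb Hb'. destruct (H1 a b a' b' Hb Hb') as [A1 A2].
  destruct (H2 a b a' b' Hb Hb') as [C1 C2].
  destruct (H2 a' b' a' b' Hb' Hb') as [C1' _].
  assert (0 <= Rabs (f a b)) by apply Rabs_pos. assert (0 <= Rabs (g a b)) by apply Rabs_pos.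
  assert (0 <= Rabs (g a' b')) by apply Rabs_pos.
  split.
  - rewrite Rabs_mult. apply Rmult_le_compat; auto.
  - replace (f a b * g a b - f a' b' * g a' b') with (f a b * (g a b - g a' b') + g a' b' * (f a b - f a' b')) by ring.
    eapply Rle_trans; [apply Rabs_triang|]. rewrite !Rabs_mult.
    assert (Rabs B1 >= B1) by (apply Rle_ge, RRle_abs).
    assert (Rabs B2 >= B2) by (apply Rle_ge, RRle_abs).
    assert (0 <= Rabs (g a b - g a' b')) by apply Rabs_pos.
    assert (0 <= Rabs (f a b - f a' b')) by apply Rabs_pos.
    set (dd := Rabs (a - a') + Rabs (b - b')) in *.
    assert (Rabs (f a b) * Rabs (g a b - g a' b') <= Rabs B1 * (L2 * dd)).
    { apply Rmult_le_compat; auto; lra. }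
    assert (Rabs (g a' b') * Rabs (f a b - f a' b') <= Rabs B2 * (L1 * dd)).
    { apply Rmult_le_compat; auto; lra. }
    nra.
Qed.

Lemma LLip_inv f c : 0 < c -> (forall a b, c <= f a b) -> LLip f -> LLip (fun a b => / f a b).
Proof.
  intros Hc Hfc Hf Rb HR. destruct (Hf Rb HR) as [L1 [B1 [HL1 H1]]].
  exists (L1 / (c * c)), (/ c). split.
  { apply Rmult_le_pos; auto. apply Rlt_le, Rinv_0_lt_compat; nra. }
  intros a b a' b' Hb Hb'. destruct (H1 a b a' b' Hb Hb') as [A1 A2].
  pose proof (Hfc a b). pose proof (Hfc a' b'). split.
  - rewrite Rabs_inv. rewrite Rabs_right by lra. apply Rinv_le_contravar; lra.
  - replace (/ f a b - / f a' b') with ((f a' b' - f a b) / (f a b * f a' b')) by (field; lra).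
    unfold Rdiv. rewrite Rabs_mult, Rabs_inv, Rabs_minus_sym.
    rewrite (Rabs_right (f a b * f a' b')) by nra.
    assert (0 <= Rabs (f a b - f a' b')) by apply Rabs_pos.
    assert (/ (f a b * f a' b') <= / (c * c)) by (apply Rinv_le_contravar; nra).
    assert (0 < / (f a b * f a' b')) by (apply Rinv_0_lt_compat; nra).
    assert (0 < / (c * c)) by (apply Rinv_0_lt_compat; nra).
    set (dd := Rabs (a - a') + Rabs (b - b')) in *.
    replace (L1 * / (c * c) * dd) with ((L1 * dd) * / (c*c)) by ring.
    apply Rmult_le_compat; lra.
Qed.

Lemma LLip_sqrt f c : 0 < c -> (forall a b, c <= f a b) -> LLip f -> LLip (fun a b => sqrt (f a b)).
Proof.
  intros Hc Hfc Hf Rb HR. destruct (Hf Rb HR) as [L1 [B1 [HL1 H1]]].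
  pose proof (sqrt_lt_R0 c Hc) as Hsc.
  exists (L1 / (2 * sqrt c)), (sqrt (Rabs B1)). split.
  { apply Rmult_le_pos; auto. apply Rlt_le, Rinv_0_lt_compat; nra. }
  intros a b a' b' Hb Hb'. destruct (H1 a b a' b' Hb Hb') as [A1 A2].
  pose proof (Hfc a b). pose proof (Hfc a' b'). split.
  - rewrite Rabs_right by (apply Rle_ge, sqrt_pos). apply sqrt_le_1_alt.
    eapply Rle_trans; [apply RRle_abs|]. eapply Rle_trans; [apply A1|apply RRle_abs].
  - assert (sqrt c <= sqrt (f a b)) by (apply sqrt_le_1_alt; lra).
    assert (sqrt c <= sqrt (f a' b')) by (apply sqrt_le_1_alt; lra).
    assert (Hx : sqrt (f a b) * sqrt (f a b) = f a b) by (apply sqrt_sqrt; lra).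
    assert (Hy : sqrt (f a' b') * sqrt (f a' b') = f a' b') by (apply sqrt_sqrt; lra).
    replace (sqrt (f a b) - sqrt (f a' b')) with ((f a b - f a' b') / (sqrt (f a b) + sqrt (f a' b'))).
    2:{ rewrite <- Hx, <- Hy at 1. field. lra. }
    unfold Rdiv. rewrite Rabs_mult, Rabs_inv. rewrite (Rabs_right (_ + _)) by lra.
    assert (0 <= Rabs (f a b - f a' b')) by apply Rabs_pos.
    assert (/ (sqrt (f a b) + sqrt (f a' b')) <= / (2 * sqrt c)) by (apply Rinv_le_contravar; lra).
    assert (0 < / (sqrt (f a b) + sqrt (f a' b'))) by (apply Rinv_0_lt_compat; lra).
    set (dd := Rabs (a - a') + Rabs (b - b')) in *.
    apply Rle_trans with ((L1 * dd) * / (sqrt (f a b) + sqrt (f a' b'))).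
    { apply Rmult_le_compat_r; lra. }
    replace (L1 * / (2 * sqrt c) * dd) with ((L1 * dd) * / (2 * sqrt c)) by ring.
    apply Rmult_le_compat_l; [|lra]. unfold dd. pose proof (Rabs_pos (a-a')). pose proof (Rabs_pos (b-b')). nra.
Qed.

Lemma LLip_max f c : LLip f -> LLip (fun a b => Rmax (f a b) c).
Proof.
  intros Hf Rb HR. destruct (Hf Rb HR) as [L1 [B1 [HL1 H1]]].
  exists L1, (Rabs B1 + Rabs c). split; auto.
  intros a b a' b' Hb Hb'. destruct (H1 a b a' b' Hb Hb') as [A1 A2].
  pose proof (RRle_abs B1). pose proof (Rabs_pos c). split.
  - destruct (Rle_or_lt (f a b) c).
    + rewrite Rmax_right by lra. pose proof (Rabs_pos B1). lra.
    + rewrite Rmax_left by lra. pose proof (Rabs_pos c). lra.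
  - eapply Rle_trans; [|apply A2].
    destruct (Rle_or_lt (f a b) c); destruct (Rle_or_lt (f a' b') c);
      [rewrite (Rmax_right (f a b)), (Rmax_right (f a' b')) by lra
      |rewrite (Rmax_right (f a b)), (Rmax_left (f a' b')) by lra
      |rewrite (Rmax_left (f a b)), (Rmax_right (f a' b')) by lra
      |rewrite (Rmax_left (f a b)), (Rmax_left (f a' b')) by lra];
      apply Rabs_le; pose proof (Rle_abs (f a b - f a' b'));
      pose proof (Rle_abs (-(f a b - f a' b'))); rewrite Rabs_Ropp in *; lra.
Qed.


Lemma lip_contpt (f : R -> R) u K : 0 <= K ->
  (forall s, Rabs (s - u) < 1 -> Rabs (f s - f u) <= K * Rabs (s - u)) -> continuity_pt f u.
Proof.
  intros HK H. unfold continuity_pt, continue_in, limit1_in, limit_in. intros eps Heps.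
  exists (Rmin 1 (eps / (K + 1))). split.
  { apply Rmin_pos; [lra|]. apply Rdiv_lt_0_compat; lra. }
  intros s [_ Hs]. simpl in *. unfold R_dist in *.
  assert (Hs1 : Rabs (s - u) < 1) by (eapply Rlt_le_trans; [apply Hs|apply Rmin_l]).
  assert (Hs2 : Rabs (s - u) < eps / (K + 1)) by (eapply Rlt_le_trans; [apply Hs|apply Rmin_r]).
  eapply Rle_lt_trans; [apply H; auto|].
  apply Rle_lt_trans with ((K+1) * Rabs (s - u)).
  { pose proof (Rabs_pos (s - u)). nra. }
  apply (Rmult_lt_compat_l (K+1)) in Hs2; [|lra].
  replace ((K + 1) * (eps / (K + 1))) with eps in Hs2 by (field; lra). lra.
Qed.

Lemma contpt_cont (f : R -> R) u : continuity_pt f u -> continuous f u.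
Proof. intro H. apply continuity_pt_filterlim. exact H. Qed.

Definition Lipf (x : R -> R) (M : R) := forall s t, Rabs (x s - x t) <= M * Rabs (s - t).

Lemma comp_cont G x y M : 0 <= M -> LLip G -> Lipf x M -> Lipf y M ->
  forall u, continuous (fun s => G (x s) (y s)) u.
Proof.
  intros HM HG Hx Hy u. apply contpt_cont.
  destruct (HG (Rabs (y u) + M)) as [L [B [HL HLB]]].
  { pose proof (Rabs_pos (y u)); lra. }
  apply lip_contpt with (K := L * (M + M)); [nra|].
  intros s Hs.
  assert (Hys : Rabs (y s) <= Rabs (y u) + M).
  { pose proof (Hy s u). pose proof (Rabs_triang_inv (y s) (y u)). pose proof (Rabs_pos (s-u)). nra. }
  assert (Hyu : Rabs (y u) <= Rabs (y u) + M) by lra.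
  destruct (HLB (x s) (y s) (x u) (y u) Hys Hyu) as [_ H2].
  eapply Rle_trans; [apply H2|].
  pose proof (Hx s u). pose proof (Hy s u).
  replace (L * (M + M) * Rabs (s - u)) with (L * (M * Rabs (s - u) + M * Rabs (s - u))) by ring.
  apply Rmult_le_compat_l; lra.
Qed.

Lemma exRI (g : R -> R) : (forall u, continuous g u) -> forall a b, ex_RInt g a b.
Proof. intros Hc a b. apply (@ex_RInt_continuous R_CompleteNormedModule). intros; apply Hc. Qed.

Lemma int_bound (g : R -> R) M a b : (forall u, continuous g u) ->
  (forall u, Rmin a b <= u <= Rmax a b -> Rabs (g u) <= M) ->
  Rabs (RInt g a b) <= M * Rabs (b - a).
Proof.
  intros Hc Hb.
  assert (Hex : forall a b, ex_RInt g a b) by (apply exRI; auto).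
  destruct (Rle_or_lt a b).
  - rewrite (Rabs_right (b - a)) by lra. rewrite Rmult_comm. apply abs_RInt_le_const; auto.
    intros. apply Hb. rewrite Rmin_left, Rmax_right; lra.
  - rewrite <- opp_RInt_swap by auto. change (Rabs (- RInt g b a) <= M * Rabs (b - a)).
    rewrite Rabs_Ropp. rewrite (Rabs_left (b - a)) by lra. replace (- (b - a)) with (a - b) by ring.
    rewrite Rmult_comm. apply abs_RInt_le_const; auto; try lra.
    intros. apply Hb. rewrite Rmin_right, Rmax_left; lra.
Qed.

Lemma int_diff (g : R -> R) s t : (forall u, continuous g u) ->
  RInt g 0 t - RInt g 0 s = RInt g s t.
Proof.
  intros Hc. assert (Hex : forall a b, ex_RInt g a b) by (apply exRI; auto).
  rewrite <- (RInt_Chasles g 0 s t) by auto. change (plus ?a ?b) with (a + b). ring.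
Qed.

Lemma int_pow (C : R) (k : nat) (s : R) : 0 <= s ->
  RInt (fun u => C * u ^ k) 0 s = C * s ^ (S k) / INR (S k).
Proof.
  intros Hs. apply is_RInt_unique.
  replace (C * s ^ S k / INR (S k)) with (minus (C * s ^ S k / INR (S k)) (C * 0 ^ S k / INR (S k))).
  2:{ change (minus ?x ?y) with (x - y). rewrite pow_i by lia. unfold Rdiv. rewrite Rmult_0_r, Rmult_0_l. apply Rminus_0_r. }
  apply (is_RInt_derive (fun u => C * u ^ S k / INR (S k))).
  - intros x _. auto_derive; auto. change (match k with 0%nat => 1 | S _ => INR k + 1 end) with (INR (S k)). field. apply not_0_INR. lia.
  - intros x _. apply (ex_derive_continuous (fun u => C * u ^ k)). auto_derive. auto.
Qed.

Lemma int_pow_neg (C : R) (k : nat) (s : R) : s <= 0 ->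
  RInt (fun u => C * (- u) ^ k) s 0 = C * (- s) ^ (S k) / INR (S k).
Proof.
  intros Hs. apply is_RInt_unique.
  replace (C * (- s) ^ S k / INR (S k)) with (minus (- C * (- 0) ^ S k / INR (S k)) (- C * (- s) ^ S k / INR (S k))).
  2:{ change (minus ?x ?y) with (x - y). replace (-0) with 0 by ring. rewrite pow_i by lia. unfold Rdiv. change (- C * 0 / INR (S k) - - C * (- s) ^ S k / INR (S k) = C * (- s) ^ S k / INR (S k)). unfold Rdiv; ring. }
  apply (is_RInt_derive (fun u => - C * (- u) ^ S k / INR (S k))).
  - intros x _. auto_derive; auto. change (match k with 0%nat => 1 | S _ => INR k + 1 end) with (INR (S k)). field. apply not_0_INR. lia.
  - intros x _. apply (ex_derive_continuous (fun u => C * (- u) ^ k)). auto_derive. auto.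
Qed.

Lemma int_pow_bound (phi : R -> R) (C : R) (k : nat) (s : R) :
  (forall u, continuous phi u) -> 0 <= C ->
  (forall u, Rabs u <= Rabs s -> Rabs (phi u) <= C * Rabs u ^ k) ->
  Rabs (RInt phi 0 s) <= C * Rabs s ^ (S k) / INR (S k).
Proof.
  intros Hc HC Hb.
  assert (Hex : forall a b, ex_RInt phi a b) by (apply exRI; auto).
  assert (Hca : forall u, continuous (fun t => Rabs (phi t)) u).
  { intro u. apply (continuous_comp phi Rabs). auto. apply continuous_Rabs. }
  assert (Hexa : forall a b, ex_RInt (fun t => Rabs (phi t)) a b) by (apply exRI; auto).
  assert (Hpc : forall a b, ex_RInt (fun u => C * u ^ k) a b).
  { apply exRI. intro u. apply (ex_derive_continuous (fun u => C * u ^ k)). auto_derive. auto. }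
  destruct (Rle_or_lt 0 s).
  - eapply Rle_trans; [apply abs_RInt_le; auto|].
    rewrite (Rabs_right s) by lra. rewrite <- int_pow by auto.
    apply RInt_le; auto. intros x Hx. rewrite <- (Rabs_right x) at 2 by lra. apply Hb.
    rewrite !Rabs_right; lra.
  - rewrite <- opp_RInt_swap by auto. change (Rabs (- RInt phi s 0) <= C * Rabs s ^ (S k) / INR (S k)).
    rewrite Rabs_Ropp.
    eapply Rle_trans; [apply abs_RInt_le; auto; lra|].
    rewrite (Rabs_left s) by lra. rewrite <- int_pow_neg by lra.
    assert (Hpn : forall a b, ex_RInt (fun u => C * (- u) ^ k) a b).
    { apply exRI. intro u. apply (ex_derive_continuous (fun u => C * (- u) ^ k)). auto_derive. auto. }
    apply RInt_le; auto; [lra|]. intros x Hx. rewrite <- (Rabs_left x) by lra. apply Hb.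
    rewrite !Rabs_left; lra.
Qed.


Fixpoint ps (a : nat -> R) (n : nat) : R := match n with O => 0 | S m => ps a m + a m end.

Lemma ps_sum a n : ps a (S n) = sum_n a n.
Proof.
  induction n. - simpl. rewrite sum_O. ring.
  - rewrite sum_Sn. change (ps a (S n) + a (S n) = plus (sum_n a n) (a (S n))). rewrite IHn. reflexivity.
Qed.

Lemma ps_lim a : ex_series a -> is_lim_seq (ps a) (Series a).
Proof.
  intro H. apply is_lim_seq_incr_1. apply is_lim_seq_ext with (u := sum_n a).
  { intro n. rewrite ps_sum. auto. }
  apply Series_correct in H. exact H.
Qed.

Definition tau a n := Series a - ps a n.

Lemma tau_lim a : ex_series a -> is_lim_seq (tau a) 0.
Proof.
  intro H. unfold tau. replace (Finite 0) with (Finite (Series a - Series a)) by (f_equal; ring).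
  apply is_lim_seq_minus'. apply is_lim_seq_const. apply ps_lim; auto.
Qed.

Lemma ps_incr a n m : (forall k, 0 <= a k) -> (n <= m)%nat -> ps a n <= ps a m.
Proof.
  intros Ha Hnm. induction Hnm. lra. simpl. pose proof (Ha m). lra.
Qed.

Lemma ps_le_Series a n : (forall k, 0 <= a k) -> ex_series a -> ps a n <= Series a.
Proof.
  intros Ha Hs.
  assert (H := is_lim_seq_le (fun _ => ps a n) (fun j => ps a (j + n)) (ps a n) (Series a)).
  simpl in H. apply H.
  - intro j. apply ps_incr; auto; lia.
  - apply is_lim_seq_const.
  - apply (is_lim_seq_incr_n (ps a) n). apply ps_lim; auto.
Qed.

Lemma lim_le_bound (u : nat -> R) (l c : R) : is_lim_seq u l -> (forall n, Rabs (u n) <= c) -> Rabs l <= c.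
Proof.
  intros Hu Hc.
  assert (H := is_lim_seq_le (fun n => Rabs (u n)) (fun _ => c) (Rabs l) c). simpl in H. apply H.
  - auto.
  - apply (is_lim_seq_abs u l Hu).
  - apply is_lim_seq_const.
Qed.

Lemma conv_lemma (u a : nat -> R) : ex_series a -> (forall k, Rabs (u (S k) - u k) <= a k) ->
  exists l : R, is_lim_seq u l /\ forall n, Rabs (l - u n) <= tau a n.
Proof.
  intros Hs Hb.
  assert (Ha : forall k, 0 <= a k). { intro k. eapply Rle_trans; [apply Rabs_pos|apply Hb]. }
  assert (Hd : forall n j, Rabs (u (j + n)%nat - u n) <= ps a (j + n) - ps a n).
  { intros n j. induction j.
    - simpl. replace (u n - u n) with 0 by ring. rewrite Rabs_R0. lra.
    - replace (u (S j + n)%nat - u n) with ((u (S (j + n)) - u (j + n)%nat) + (u (j + n)%nat - u n)) by (simpl; ring).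
      eapply Rle_trans; [apply Rabs_triang|]. simpl. pose proof (Hb (j + n)%nat). lra. }
  assert (Ht : forall n j, Rabs (u (j + n)%nat - u n) <= tau a n).
  { intros. eapply Rle_trans; [apply Hd|]. unfold tau. pose proof (ps_le_Series a (j+n) Ha Hs). lra. }
  assert (Hc : ex_lim_seq_cauchy u).
  { intro eps. pose proof (tau_lim a Hs) as HT. apply is_lim_seq_spec in HT.
    destruct (HT eps) as [N HN]. exists N. intros n m Hn Hm.
    destruct (le_lt_dec n m).
    - replace m with ((m - n) + n)%nat by lia. rewrite Rabs_minus_sym.
      eapply Rle_lt_trans; [apply Ht|]. specialize (HN n Hn). rewrite Rminus_0_r in HN.
      eapply Rle_lt_trans; [apply RRle_abs|exact HN].
    - replace n with ((n - m) + m)%nat by lia.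
      eapply Rle_lt_trans; [apply Ht|]. specialize (HN m Hm). rewrite Rminus_0_r in HN.
      eapply Rle_lt_trans; [apply RRle_abs|exact HN]. }
  apply ex_lim_seq_cauchy_corr in Hc. destruct Hc as [l Hl]. exists l. split; auto.
  intro n. apply (lim_le_bound (fun j => u (j + n)%nat - u n)).
  - apply is_lim_seq_minus'. apply (is_lim_seq_incr_n u n). auto. apply is_lim_seq_const.
  - intro j. apply Ht.
Qed.

Lemma lim_eq_bound (u e : nat -> R) (l c : R) : is_lim_seq u l -> is_lim_seq e 0 ->
  (forall n, Rabs (u n - c) <= e n) -> l = c.
Proof.
  intros Hu He Hb.
  assert (H := is_lim_seq_le (fun n => Rabs (u n - c)) e (Rabs (l - c)) 0). simpl in H.
  assert (Rabs (l - c) <= 0).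
  { apply H; auto. apply (is_lim_seq_abs (fun n => u n - c) (l - c)).
    apply is_lim_seq_minus'; auto. apply is_lim_seq_const. }
  pose proof (Rabs_pos (l - c)). assert (Rabs (l - c) = 0) by lra.
  apply Rabs_eq_0 in H2. lra.
Qed.


Fixpoint pic (G1 G2 : R -> R -> R) (a0 b0 : R) (n : nat) : R -> R * R :=
  match n with
  | O => fun _ => (a0, b0)
  | S m => fun t =>
     (a0 + RInt (fun s => G1 (fst (pic G1 G2 a0 b0 m s)) (snd (pic G1 G2 a0 b0 m s))) 0 t,
      b0 + RInt (fun s => G2 (fst (pic G1 G2 a0 b0 m s)) (snd (pic G1 G2 a0 b0 m s))) 0 t)
  end.

Definition px G1 G2 a0 b0 n t := fst (pic G1 G2 a0 b0 n t).
Definition py G1 G2 a0 b0 n t := snd (pic G1 G2 a0 b0 n t).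

Definition Hyp (G1 G2 : R -> R -> R) M := 0 <= M /\ LLip G1 /\ LLip G2 /\
  (forall a b, Rabs (G1 a b) <= M) /\ (forall a b, Rabs (G2 a b) <= M).

Lemma px_S G1 G2 a0 b0 n t : px G1 G2 a0 b0 (S n) t =
  a0 + RInt (fun s => G1 (px G1 G2 a0 b0 n s) (py G1 G2 a0 b0 n s)) 0 t.
Proof. reflexivity. Qed.
Lemma py_S G1 G2 a0 b0 n t : py G1 G2 a0 b0 (S n) t =
  b0 + RInt (fun s => G2 (px G1 G2 a0 b0 n s) (py G1 G2 a0 b0 n s)) 0 t.
Proof. reflexivity. Qed.

Lemma RInt0 (g : R -> R) : RInt g 0 0 = 0.
Proof. rewrite RInt_point. reflexivity. Qed.

Lemma pic_zero G1 G2 a0 b0 n : px G1 G2 a0 b0 n 0 = a0 /\ py G1 G2 a0 b0 n 0 = b0.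
Proof.
  destruct n. - split; reflexivity.
  - rewrite px_S, py_S, !RInt0. split; ring.
Qed.

Lemma lip_step G M c (x y : R -> R) : 0 <= M -> LLip G -> (forall a b, Rabs (G a b) <= M) ->
  Lipf x M -> Lipf y M -> Lipf (fun t => c + RInt (fun s => G (x s) (y s)) 0 t) M.
Proof.
  intros HM HG HB Hx Hy s t.
  assert (Hc := comp_cont G x y M HM HG Hx Hy).
  replace (c + RInt (fun s0 => G (x s0) (y s0)) 0 s - (c + RInt (fun s0 => G (x s0) (y s0)) 0 t))
    with (RInt (fun s0 => G (x s0) (y s0)) 0 s - RInt (fun s0 => G (x s0) (y s0)) 0 t) by ring.
  rewrite int_diff by auto. apply int_bound; auto.
Qed.

Lemma pic_lip G1 G2 M a0 b0 : Hyp G1 G2 M -> forall n,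
  Lipf (px G1 G2 a0 b0 n) M /\ Lipf (py G1 G2 a0 b0 n) M.
Proof.
  intros [HM [H1 [H2 [HB1 HB2]]]] n. induction n as [|n [IHx IHy]].
  - split; intros s t; unfold px, py; simpl; replace (_ - _) with 0 by ring; rewrite Rabs_R0;
      pose proof (Rabs_pos (s - t)); nra.
  - split.
    + intros s t. rewrite !px_S. apply (lip_step G1 M a0 _ _ HM H1 HB1 IHx IHy).
    + intros s t. rewrite !py_S. apply (lip_step G2 M b0 _ _ HM H2 HB2 IHx IHy).
Qed.

Lemma lip_from0 (x : R -> R) M s : Lipf x M -> Rabs (x s) <= Rabs (x 0) + M * Rabs s.
Proof.
  intros H. pose proof (H s 0). rewrite Rminus_0_r in H0.
  pose proof (Rabs_triang_inv (x s) (x 0)). lra.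
Qed.

Lemma box_from_lip (f : R -> R) M b0 u t : 0 <= M -> Lipf f M -> f 0 = b0 -> Rabs u <= Rabs t ->
  Rabs (f u) <= Rabs b0 + M * Rabs t.
Proof.
  intros HM Hf H0 Hu. pose proof (lip_from0 f M u Hf). rewrite H0 in H.
  pose proof (Rmult_le_compat_l M _ _ HM Hu). lra.
Qed.

Lemma between_abs u t : Rmin 0 t <= u <= Rmax 0 t -> Rabs u <= Rabs t.
Proof.
  intros Hu. destruct (Rle_or_lt 0 t).
  - rewrite Rmin_left, Rmax_right in Hu by lra. rewrite !Rabs_right; lra.
  - rewrite Rmin_right, Rmax_left in Hu by lra. apply Rabs_le. rewrite (Rabs_left t); lra.
Qed.

Lemma RInt_minus_R (f g : R -> R) a b : (forall u, continuous f u) -> (forall u, continuous g u) ->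
  RInt f a b - RInt g a b = RInt (fun u => f u - g u) a b.
Proof.
  intros Hf Hg. symmetry. exact (RInt_minus f g a b (exRI f Hf a b) (exRI g Hg a b)).
Qed.

Lemma cont_minus_R (f g : R -> R) u : continuous f u -> continuous g u -> continuous (fun x => f x - g x) u.
Proof. intros. apply (continuous_minus f g u); auto. Qed.

Definition edist G1 G2 a0 b0 n s :=
  Rabs (px G1 G2 a0 b0 (S n) s - px G1 G2 a0 b0 n s) + Rabs (py G1 G2 a0 b0 (S n) s - py G1 G2 a0 b0 n s).

Lemma pic_diff G1 G2 M a0 b0 T L1 L2 : Hyp G1 G2 M -> 0 <= T -> 0 <= L1 -> 0 <= L2 ->
  (forall a b a' b', Rabs b <= Rabs b0 + M * T -> Rabs b' <= Rabs b0 + M * T ->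
     Rabs (G1 a b - G1 a' b') <= L1 * (Rabs (a - a') + Rabs (b - b'))) ->
  (forall a b a' b', Rabs b <= Rabs b0 + M * T -> Rabs b' <= Rabs b0 + M * T ->
     Rabs (G2 a b - G2 a' b') <= L2 * (Rabs (a - a') + Rabs (b - b'))) ->
  forall n s, Rabs s <= T ->
  edist G1 G2 a0 b0 n s <= 2 * M * (L1 + L2) ^ n * Rabs s ^ (S n) / INR (fact (S n)).
Proof.
  intros HH HT HL1 HL2 Hl1 Hl2. pose proof HH as [HM [H1 [H2 [HB1 HB2]]]].
  pose proof (pic_lip G1 G2 M a0 b0 HH) as Hlip.
  assert (Hbox : forall m u, Rabs u <= T -> Rabs (py G1 G2 a0 b0 m u) <= Rabs b0 + M * T).
  { intros m u Hu. destruct (Hlip m) as [_ Hy]. pose proof (lip_from0 _ M u Hy).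
    destruct (pic_zero G1 G2 a0 b0 m) as [_ Hz]. rewrite Hz in H. nra. }
  induction n as [|n IH]; intros s Hs.
  - unfold edist. rewrite px_S, py_S. unfold px, py. cbn [pic fst snd].
    unfold Rminus at 1 2. rewrite (Rplus_comm a0), (Rplus_comm b0), !Rplus_assoc, !Rplus_opp_r, !Rplus_0_r.
    eapply Rle_trans; [apply Rplus_le_compat; apply int_bound; auto; intro; apply continuous_const|].
    rewrite Rminus_0_r. simpl. lra.
  - destruct (Hlip n) as [Hxn Hyn]. destruct (Hlip (S n)) as [Hxn' Hyn'].
    set (C := 2 * M * (L1 + L2) ^ n / INR (fact (S n))).
    assert (HC : 0 <= C).
    { unfold C. apply Rmult_le_pos. apply Rmult_le_pos. lra. apply pow_le; lra.
      apply Rlt_le, Rinv_0_lt_compat, lt_0_INR, lt_O_fact. }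
    assert (IH' : forall u, Rabs u <= Rabs s -> edist G1 G2 a0 b0 n u <= C * Rabs u ^ (S n)).
    { intros u Hu. eapply Rle_trans; [apply IH; lra|]. unfold C. right. unfold Rdiv. ring. }
    unfold edist. rewrite (px_S _ _ _ _ (S n)), (py_S _ _ _ _ (S n)), (px_S _ _ _ _ n), (py_S _ _ _ _ n).
    set (g1 := fun s0 => G1 (px G1 G2 a0 b0 (S n) s0) (py G1 G2 a0 b0 (S n) s0)).
    set (g1' := fun s0 => G1 (px G1 G2 a0 b0 n s0) (py G1 G2 a0 b0 n s0)).
    set (g2 := fun s0 => G2 (px G1 G2 a0 b0 (S n) s0) (py G1 G2 a0 b0 (S n) s0)).
    set (g2' := fun s0 => G2 (px G1 G2 a0 b0 n s0) (py G1 G2 a0 b0 n s0)).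
    assert (c1 : forall u, continuous g1 u) by (apply comp_cont with M; auto).
    assert (c1' : forall u, continuous g1' u) by (apply comp_cont with M; auto).
    assert (c2 : forall u, continuous g2 u) by (apply comp_cont with M; auto).
    assert (c2' : forall u, continuous g2' u) by (apply comp_cont with M; auto).
    replace (a0 + RInt g1 0 s - (a0 + RInt g1' 0 s)) with (RInt g1 0 s - RInt g1' 0 s) by ring.
    replace (b0 + RInt g2 0 s - (b0 + RInt g2' 0 s)) with (RInt g2 0 s - RInt g2' 0 s) by ring.
    rewrite !RInt_minus_R by auto.
    assert (E1 : Rabs (RInt (fun u => g1 u - g1' u) 0 s) <= (L1 * C) * Rabs s ^ (S (S n)) / INR (S (S n))).
    { apply int_pow_bound.
      - intro u. apply cont_minus_R; auto.
      - nra.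
      - intros u Hu. unfold g1, g1'. eapply Rle_trans; [apply Hl1; apply Hbox; lra|].
        rewrite Rmult_assoc. apply Rmult_le_compat_l; auto. apply IH'; auto. }
    assert (E2 : Rabs (RInt (fun u => g2 u - g2' u) 0 s) <= (L2 * C) * Rabs s ^ (S (S n)) / INR (S (S n))).
    { apply int_pow_bound.
      - intro u. apply cont_minus_R; auto.
      - nra.
      - intros u Hu. unfold g2, g2'. eapply Rle_trans; [apply Hl2; apply Hbox; lra|].
        rewrite Rmult_assoc. apply Rmult_le_compat_l; auto. apply IH'; auto. }
    eapply Rle_trans; [apply Rplus_le_compat; [apply E1|apply E2]|].
    right. unfold C. rewrite (fact_simpl (S n)), mult_INR.
    assert (INR (S (S n)) <> 0) by (apply not_0_INR; lia).
    assert (INR (fact (S n)) <> 0) by (apply INR_fact_neq_0).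
    simpl pow. field. split; auto.
Qed.

Lemma exp_series x : ex_series (fun n => / INR (fact n) * x ^ n).
Proof. exists (exp x). apply is_pseries_R. apply is_exp_Reals. Qed.

Lemma bound_aux M L T s n : 0 <= M -> 0 <= L -> Rabs s <= T ->
  2 * M * L ^ n * Rabs s ^ (S n) / INR (fact (S n)) <= 2 * M * T * (/ INR (fact n) * (L * T) ^ n).
Proof.
  intros HM HL Hs. pose proof (Rabs_pos s) as Hs0.
  assert (Hf : 0 < INR (fact n)) by (apply lt_0_INR, lt_O_fact).
  assert (Hf' : INR (fact n) <= INR (fact (S n))).
  { apply le_INR. rewrite fact_simpl. lia. }
  assert (Hp : Rabs s ^ n <= T ^ n) by (apply pow_incr; lra).
  assert (Hp0 : 0 <= Rabs s ^ n) by (apply pow_le; lra).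
  assert (HLn : 0 <= L ^ n) by (apply pow_le; lra).
  rewrite Rpow_mult_distr. simpl pow.
  apply Rle_trans with (2 * M * L ^ n * (Rabs s * Rabs s ^ n) / INR (fact n)).
  { unfold Rdiv. apply Rmult_le_compat_l.
    - apply Rmult_le_pos; [apply Rmult_le_pos|]; nra.
    - apply Rinv_le_contravar; lra. }
  unfold Rdiv. rewrite <- (Rmult_comm (/ INR (fact n))).
  assert (0 < / INR (fact n)) by (apply Rinv_0_lt_compat; lra).
  assert (Rabs s * Rabs s ^ n <= T * T ^ n) by (apply Rmult_le_compat; lra).
  assert (0 <= 2 * M * L ^ n) by nra.
  assert (2 * M * L ^ n * (Rabs s * Rabs s ^ n) <= 2 * M * L ^ n * (T * T ^ n)) by (apply Rmult_le_compat_l; lra).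
  nra.
Qed.

Lemma picard_exists G1 G2 M a0 b0 : Hyp G1 G2 M ->
  exists x y : R -> R, x 0 = a0 /\ y 0 = b0 /\ Lipf x M /\ Lipf y M /\
   forall t, x t = a0 + RInt (fun s => G1 (x s) (y s)) 0 t /\ y t = b0 + RInt (fun s => G2 (x s) (y s)) 0 t.
Proof.
  intros HH. pose proof HH as [HM [H1 [H2 [HB1 HB2]]]].
  pose proof (pic_lip G1 G2 M a0 b0 HH) as Hlip.
  set (X := fun n t => px G1 G2 a0 b0 n t). set (Y := fun n t => py G1 G2 a0 b0 n t).
  assert (Key : forall T, 0 <= T -> exists L1 L2 (a : nat -> R), 0 <= L1 /\ 0 <= L2 /\
    (forall a b a' b', Rabs b <= Rabs b0 + M * T -> Rabs b' <= Rabs b0 + M * T ->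
       Rabs (G1 a b - G1 a' b') <= L1 * (Rabs (a - a') + Rabs (b - b'))) /\
    (forall a b a' b', Rabs b <= Rabs b0 + M * T -> Rabs b' <= Rabs b0 + M * T ->
       Rabs (G2 a b - G2 a' b') <= L2 * (Rabs (a - a') + Rabs (b - b'))) /\
    ex_series a /\ forall n s, Rabs s <= T -> edist G1 G2 a0 b0 n s <= a n).
  { intros T HT. assert (HRb : 0 <= Rabs b0 + M * T) by (pose proof (Rabs_pos b0); nra).
    destruct (H1 _ HRb) as [L1 [B1 [HL1 HG1]]]. destruct (H2 _ HRb) as [L2 [B2 [HL2 HG2]]].
    assert (Hl1 : forall a b a' b', Rabs b <= Rabs b0 + M * T -> Rabs b' <= Rabs b0 + M * T ->
       Rabs (G1 a b - G1 a' b') <= L1 * (Rabs (a - a') + Rabs (b - b'))) by (intros; apply HG1; auto).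
    assert (Hl2 : forall a b a' b', Rabs b <= Rabs b0 + M * T -> Rabs b' <= Rabs b0 + M * T ->
       Rabs (G2 a b - G2 a' b') <= L2 * (Rabs (a - a') + Rabs (b - b'))) by (intros; apply HG2; auto).
    exists L1, L2, (fun n => 2 * M * T * (/ INR (fact n) * ((L1 + L2) * T) ^ n)).
    repeat split; auto.
    - apply (ex_series_scal (K := R_AbsRing) (2 * M * T) (fun n => / INR (fact n) * ((L1 + L2) * T) ^ n)).
      apply exp_series.
    - intros n s Hs. eapply Rle_trans; [apply (pic_diff G1 G2 M a0 b0 T L1 L2); auto|].
      apply bound_aux; auto. lra. }
  assert (Conv : forall T, 0 <= T -> exists L1 L2 (a : nat -> R), 0 <= L1 /\ 0 <= L2 /\
    (forall a b a' b', Rabs b <= Rabs b0 + M * T -> Rabs b' <= Rabs b0 + M * T ->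
       Rabs (G1 a b - G1 a' b') <= L1 * (Rabs (a - a') + Rabs (b - b'))) /\
    (forall a b a' b', Rabs b <= Rabs b0 + M * T -> Rabs b' <= Rabs b0 + M * T ->
       Rabs (G2 a b - G2 a' b') <= L2 * (Rabs (a - a') + Rabs (b - b'))) /\
    is_lim_seq (tau a) 0 /\
    forall s, Rabs s <= T ->
      is_lim_seq (fun n => X n s) (real (Lim_seq (fun n => X n s))) /\
      is_lim_seq (fun n => Y n s) (real (Lim_seq (fun n => Y n s))) /\
      forall n, Rabs (real (Lim_seq (fun n => X n s)) - X n s) <= tau a n /\
                Rabs (real (Lim_seq (fun n => Y n s)) - Y n s) <= tau a n).
  { intros T HT. destruct (Key T HT) as [L1 [L2 [a [HL1 [HL2 [Hl1 [Hl2 [Ha Hb]]]]]]]].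
    exists L1, L2, a. do 4 (split; auto). split. { apply tau_lim; auto. }
    intros s Hs.
    destruct (conv_lemma (fun n => X n s) a Ha) as [l [Hl Hlb]];
      [intro k; eapply Rle_trans; [|apply (Hb k s Hs)]; unfold edist, X;
       pose proof (Rabs_pos (py G1 G2 a0 b0 (S k) s - py G1 G2 a0 b0 k s)); lra|].
    destruct (conv_lemma (fun n => Y n s) a Ha) as [l' [Hl' Hlb']];
      [intro k; eapply Rle_trans; [|apply (Hb k s Hs)]; unfold edist, Y;
       pose proof (Rabs_pos (px G1 G2 a0 b0 (S k) s - px G1 G2 a0 b0 k s)); lra|].
    rewrite (is_lim_seq_unique _ _ Hl), (is_lim_seq_unique _ _ Hl'). simpl. auto. }
  set (x := fun s => real (Lim_seq (fun n => X n s))).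
  set (y := fun s => real (Lim_seq (fun n => Y n s))).
  assert (Lim : forall s, is_lim_seq (fun n => X n s) (x s) /\ is_lim_seq (fun n => Y n s) (y s)).
  { intro s. destruct (Conv (Rabs s) (Rabs_pos s)) as [L1 [L2 [a [_ [_ [_ [_ [_ Hc]]]]]]]].
    destruct (Hc s (Rle_refl _)) as [A [B _]]. auto. }
  assert (Hx0 : x 0 = a0).
  { unfold x. rewrite (is_lim_seq_unique _ a0). reflexivity.
    apply is_lim_seq_ext with (fun _ => a0). intro n. unfold X. symmetry; apply pic_zero.
    apply is_lim_seq_const. }
  assert (Hy0 : y 0 = b0).
  { unfold y. rewrite (is_lim_seq_unique _ b0). reflexivity.
    apply is_lim_seq_ext with (fun _ => b0). intro n. unfold Y. symmetry; apply pic_zero.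
    apply is_lim_seq_const. }
  assert (Lx : Lipf x M).
  { intros s t. apply (lim_le_bound (fun n => X n s - X n t)).
    - apply (is_lim_seq_minus' (fun n => X n s) (fun n => X n t) (x s) (x t)); [apply (proj1 (Lim s))|apply (proj1 (Lim t))].
    - intro n. destruct (Hlip n) as [A B]. apply A. }
  assert (Ly : Lipf y M).
  { intros s t. apply (lim_le_bound (fun n => Y n s - Y n t)).
    - apply (is_lim_seq_minus' (fun n => Y n s) (fun n => Y n t) (y s) (y t)); [apply (proj2 (Lim s))|apply (proj2 (Lim t))].
    - intro n. destruct (Hlip n) as [A B]. apply B. }
  exists x, y. split; [exact Hx0|]. split; [exact Hy0|]. split; [exact Lx|]. split; [exact Ly|].
  intro t. destruct (Conv (Rabs t) (Rabs_pos t)) as [L1 [L2 [a [HL1 [HL2 [Hl1 [Hl2 [Ht Hc]]]]]]]].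
  assert (Hbox : forall n u, Rabs u <= Rabs t -> Rabs (Y n u) <= Rabs b0 + M * Rabs t).
  { intros n u Hu. destruct (Hlip n) as [_ Hy]. apply (box_from_lip _ M); auto. apply pic_zero. }
  assert (Hboxy : forall u, Rabs u <= Rabs t -> Rabs (y u) <= Rabs b0 + M * Rabs t).
  { intros u Hu. apply (box_from_lip _ M); auto. }
  assert (Hbet : forall u, Rmin 0 t <= u <= Rmax 0 t -> Rabs u <= Rabs t).
  { intros u Hu. apply between_abs; auto. }
  assert (Hcx : forall u, continuous (fun s => G1 (x s) (y s)) u) by (apply comp_cont with M; auto).
  assert (Hcy : forall u, continuous (fun s => G2 (x s) (y s)) u) by (apply comp_cont with M; auto).
  assert (Hlim2 : is_lim_seq (fun n => (L1 + L2) * (2 * tau a n) * Rabs t) 0).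
  { replace (Finite 0) with (Finite ((L1 + L2) * (2 * 0) * Rabs t)) by (f_equal; ring).
    apply is_lim_seq_mult'. apply is_lim_seq_mult'. apply is_lim_seq_const.
    apply is_lim_seq_mult'. apply is_lim_seq_const. auto. apply is_lim_seq_const. }
  split.
  - apply (lim_eq_bound (fun n => X (S n) t) (fun n => (L1 + L2) * (2 * tau a n) * Rabs t)).
    + apply (is_lim_seq_incr_1 (fun n => X n t)). apply (proj1 (Lim t)).
    + auto.
    + intro n. unfold X. rewrite px_S.
      assert (Hcn : forall u, continuous (fun s => G1 (px G1 G2 a0 b0 n s) (py G1 G2 a0 b0 n s)) u).
      { apply comp_cont with M; auto; apply (Hlip n). }
      replace (a0 + RInt (fun s : R => G1 (px G1 G2 a0 b0 n s) (py G1 G2 a0 b0 n s)) 0 t - (a0 + RInt (fun s : R => G1 (x s) (y s)) 0 t))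
        with (RInt (fun s : R => G1 (px G1 G2 a0 b0 n s) (py G1 G2 a0 b0 n s)) 0 t - RInt (fun s : R => G1 (x s) (y s)) 0 t) by ring.
      rewrite RInt_minus_R by auto. replace ((L1+L2)*(2*tau a n)*Rabs t) with (((L1+L2)*(2*tau a n)) * Rabs (t - 0)) by (rewrite Rminus_0_r; ring).
      apply int_bound. { intro u; apply cont_minus_R; auto. }
      intros u Hu. specialize (Hbet u Hu).
      eapply Rle_trans; [apply Hl1; auto|].
      destruct (Hc u Hbet) as [_ [_ Hn]]. destruct (Hn n) as [E1 E2].
      rewrite (Rabs_minus_sym (X n u)), (Rabs_minus_sym (Y n u)).
      assert (E1' : Rabs (x u - X n u) <= tau a n) by exact E1.
      assert (E2' : Rabs (y u - Y n u) <= tau a n) by exact E2.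
      pose proof (Rabs_pos (x u - X n u)).
      apply Rle_trans with (L1 * (2 * tau a n)). { apply Rmult_le_compat_l; lra. }
      apply Rmult_le_compat_r; lra.
  - apply (lim_eq_bound (fun n => Y (S n) t) (fun n => (L1 + L2) * (2 * tau a n) * Rabs t)).
    + apply (is_lim_seq_incr_1 (fun n => Y n t)). apply (proj2 (Lim t)).
    + auto.
    + intro n. unfold Y. rewrite py_S.
      assert (Hcn : forall u, continuous (fun s => G2 (px G1 G2 a0 b0 n s) (py G1 G2 a0 b0 n s)) u).
      { apply comp_cont with M; auto; apply (Hlip n). }
      replace (b0 + RInt (fun s : R => G2 (px G1 G2 a0 b0 n s) (py G1 G2 a0 b0 n s)) 0 t - (b0 + RInt (fun s : R => G2 (x s) (y s)) 0 t))
        with (RInt (fun s : R => G2 (px G1 G2 a0 b0 n s) (py G1 G2 a0 b0 n s)) 0 t - RInt (fun s : R => G2 (x s) (y s)) 0 t) by ring.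
      rewrite RInt_minus_R by auto. replace ((L1+L2)*(2*tau a n)*Rabs t) with (((L1+L2)*(2*tau a n)) * Rabs (t - 0)) by (rewrite Rminus_0_r; ring).
      apply int_bound. { intro u; apply cont_minus_R; auto. }
      intros u Hu. specialize (Hbet u Hu).
      eapply Rle_trans; [apply Hl2; auto|].
      destruct (Hc u Hbet) as [_ [_ Hn]]. destruct (Hn n) as [E1 E2].
      rewrite (Rabs_minus_sym (X n u)), (Rabs_minus_sym (Y n u)).
      assert (E1' : Rabs (x u - X n u) <= tau a n) by exact E1.
      assert (E2' : Rabs (y u - Y n u) <= tau a n) by exact E2.
      pose proof (Rabs_pos (x u - X n u)).
      apply Rle_trans with (L2 * (2 * tau a n)). { apply Rmult_le_compat_l; lra. }
      apply Rmult_le_compat_r; lra.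
Qed.


Lemma ode_deriv (x g : R -> R) c : (forall u, continuous g u) -> (forall t, x t = c + RInt g 0 t) ->
  forall t, derivable_pt_lim x t (g t).
Proof.
  intros Hg Hx t. apply is_derive_Reals.
  apply is_derive_ext with (fun t => c + RInt g 0 t). { intro; symmetry; auto. }
  assert (D : is_derive (fun t => RInt g 0 t) t (g t)).
  { apply (is_derive_RInt g (fun t => RInt g 0 t) 0 t).
    - apply filter_forall. intros. apply (@RInt_correct R_CompleteNormedModule). apply exRI; auto.
    - auto. }
  pose proof (is_derive_plus _ _ _ _ _ (is_derive_const c t) D) as E.
  rewrite plus_zero_l in E. exact E.
Qed.

Lemma dsq (f g : R -> R) t a b : derivable_pt_lim f t a -> derivable_pt_lim g t b ->
  derivable_pt_lim (fun s => (f s - g s) * (f s - g s)) t (2 * (f t - g t) * (a - b)).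
Proof.
  intros Hf Hg.
  assert (H := derivable_pt_lim_mult _ _ _ _ _ (derivable_pt_lim_minus f g t a b Hf Hg) (derivable_pt_lim_minus f g t a b Hf Hg)).
  replace (2 * (f t - g t) * (a - b)) with ((a - b) * (f - g)%F t + (f - g)%F t * (a - b)).
  exact H. unfold minus_fct. ring.
Qed.

Lemma bounded_deriv_lip (f f' : R -> R) M : (forall t, derivable_pt_lim f t (f' t)) ->
  (forall t, Rabs (f' t) <= M) -> Lipf f M.
Proof.
  intros Hd Hb s t. destruct (MVT_abs f f' t s) as [c [Hc _]]. { intros; apply Hd. }
  rewrite Hc. apply Rmult_le_compat_r. apply Rabs_pos. auto.
Qed.

Lemma alg_bound dx dy g1 g2 L1 L2 : 0 <= L1 -> 0 <= L2 ->
  Rabs g1 <= L1 * (Rabs dx + Rabs dy) -> Rabs g2 <= L2 * (Rabs dx + Rabs dy) ->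
  Rabs (2 * dx * g1 + 2 * dy * g2) <= 4 * (L1 + L2) * (dx * dx + dy * dy).
Proof.
  intros H1 H2 Hg1 Hg2.
  eapply Rle_trans; [apply Rabs_triang|]. rewrite !Rabs_mult.
  rewrite (Rabs_right 2) by lra.
  pose proof (Rabs_pos dx). pose proof (Rabs_pos dy). pose proof (Rabs_pos g1). pose proof (Rabs_pos g2).
  assert (E1 : Rabs dx * Rabs dx = dx * dx) by (rewrite <- Rabs_mult; apply Rabs_right; nra).
  assert (E2 : Rabs dy * Rabs dy = dy * dy) by (rewrite <- Rabs_mult; apply Rabs_right; nra).
  set (A := Rabs dx) in *. set (B := Rabs dy) in *. clearbody A B.
  assert (2 * A * Rabs g1 <= 2 * A * (L1 * (A + B))) by (apply Rmult_le_compat_l; lra).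
  assert (2 * B * Rabs g2 <= 2 * B * (L2 * (A + B))) by (apply Rmult_le_compat_l; lra).
  assert (2 * A * (L1 * (A + B)) + 2 * B * (L2 * (A + B)) <= 2 * (L1 + L2) * ((A + B) * (A + B))) by nra.
  assert ((A + B) * (A + B) <= 2 * (A * A + B * B)) by (pose proof (Rle_0_sqr (A - B)); unfold Rsqr in *; lra).
  rewrite <- E1, <- E2. nra.
Qed.

Lemma sq_zero dx dy : dx * dx + dy * dy <= 0 -> dx = 0 /\ dy = 0.
Proof. intros. split; nra. Qed.

Lemma exp_deriv K s : derivable_pt_lim (fun s => exp (K * s)) s (K * exp (K * s)).
Proof. apply is_derive_Reals. auto_derive; auto. ring. Qed.

Lemma uniq_ode G1 G2 M x1 y1 x2 y2 : Hyp G1 G2 M ->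
  (forall t, derivable_pt_lim x1 t (G1 (x1 t) (y1 t))) ->
  (forall t, derivable_pt_lim y1 t (G2 (x1 t) (y1 t))) ->
  (forall t, derivable_pt_lim x2 t (G1 (x2 t) (y2 t))) ->
  (forall t, derivable_pt_lim y2 t (G2 (x2 t) (y2 t))) ->
  x1 0 = x2 0 -> y1 0 = y2 0 -> forall t, x1 t = x2 t /\ y1 t = y2 t.
Proof.
  intros HH Dx1 Dy1 Dx2 Dy2 E0x E0y t.
  pose proof HH as [HM [H1 [H2 [HB1 HB2]]]].
  assert (Ly1 : Lipf y1 M) by (apply (bounded_deriv_lip _ _ M Dy1); auto).
  assert (Ly2 : Lipf y2 M) by (apply (bounded_deriv_lip _ _ M Dy2); auto).
  set (T := Rabs t). assert (HT : 0 <= T) by apply Rabs_pos.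
  assert (HRb : 0 <= Rabs (y1 0) + M * T) by (pose proof (Rabs_pos (y1 0)); nra).
  destruct (H1 _ HRb) as [L1 [B1 [HL1 HG1]]]. destruct (H2 _ HRb) as [L2 [B2 [HL2 HG2]]].
  set (K := 4 * (L1 + L2)).
  set (Q := fun s => (x1 s - x2 s) * (x1 s - x2 s) + (y1 s - y2 s) * (y1 s - y2 s)).
  set (Q' := fun s => 2 * (x1 s - x2 s) * (G1 (x1 s) (y1 s) - G1 (x2 s) (y2 s))
                    + 2 * (y1 s - y2 s) * (G2 (x1 s) (y1 s) - G2 (x2 s) (y2 s))).
  assert (DQ : forall s, derivable_pt_lim Q s (Q' s)).
  { intro s. apply (derivable_pt_lim_plus (fun s => (x1 s - x2 s) * (x1 s - x2 s)) (fun s => (y1 s - y2 s) * (y1 s - y2 s)));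
      apply dsq; auto. }
  assert (Hb : forall s, Rabs s <= T -> Rabs (Q' s) <= K * Q s).
  { intros s Hs.
    assert (b1 : Rabs (y1 s) <= Rabs (y1 0) + M * T) by (apply (box_from_lip _ M); auto).
    assert (b2 : Rabs (y2 s) <= Rabs (y1 0) + M * T) by (apply (box_from_lip _ M); auto).
    unfold Q', Q, K. apply alg_bound; auto.
    - destruct (HG1 (x1 s) (y1 s) (x2 s) (y2 s) b1 b2) as [_ A]. exact A.
    - destruct (HG2 (x1 s) (y1 s) (x2 s) (y2 s) b1 b2) as [_ A]. exact A. }
  assert (Q0 : Q 0 = 0) by (unfold Q; rewrite E0x, E0y; ring).
  assert (Qpos : forall s, 0 <= Q s).
  { intro s. unfold Q. pose proof (Rle_0_sqr (x1 s - x2 s)). pose proof (Rle_0_sqr (y1 s - y2 s)). unfold Rsqr in *. lra. }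
  assert (Qt : Q t <= 0).
  { destruct (Rtotal_order 0 t) as [Hp | [Hz | Hn]].
    - set (phi := fun s => exp (- K * s) * Q s).
      destruct (MVT_cor2 phi (fun s => - K * exp (- K * s) * Q s + exp (- K * s) * Q' s) 0 t Hp) as [c [Hc Hc']].
      { intros c _. apply (derivable_pt_lim_mult (fun s => exp (- K * s)) Q). apply exp_deriv. apply DQ. }
      unfold phi in Hc. rewrite Q0 in Hc.
      assert (Hcb : Rabs (Q' c) <= K * Q c) by (apply Hb; unfold T; rewrite !Rabs_right; lra).
      assert (Ep : 0 < exp (- K * c)) by apply exp_pos.
      assert (Et : 0 < exp (- K * t)) by apply exp_pos.
      assert (Q' c <= K * Q c) by (pose proof (Rle_abs (Q' c)); lra).
      assert (- K * exp (- K * c) * Q c + exp (- K * c) * Q' c <= 0) by nra.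
      assert (exp (- K * t) * Q t <= 0) by nra. nra.
    - subst t. lra.
    - set (phi := fun s => exp (K * s) * Q s).
      destruct (MVT_cor2 phi (fun s => K * exp (K * s) * Q s + exp (K * s) * Q' s) t 0 Hn) as [c [Hc Hc']].
      { intros c _. apply (derivable_pt_lim_mult (fun s => exp (K * s)) Q). apply exp_deriv. apply DQ. }
      unfold phi in Hc. rewrite Q0 in Hc.
      assert (Hcb : Rabs (Q' c) <= K * Q c) by (apply Hb; unfold T; rewrite !Rabs_left; lra).
      assert (Ep : 0 < exp (K * c)) by apply exp_pos.
      assert (Et : 0 < exp (K * t)) by apply exp_pos.
      assert (- (K * Q c) <= Q' c) by (pose proof (Rle_abs (- Q' c)); rewrite Rabs_Ropp in *; lra).
      assert (0 <= K * exp (K * c) * Q c + exp (K * c) * Q' c) by nra.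
      assert (exp (K * t) * Q t <= 0) by nra. nra. }
  unfold Q in Qt. apply sq_zero in Qt. lra.
Qed.


Definition Gth (d beta th : R) : R :=
  (beta * sqrt beta * ln ((1 + sin th) / cos th) + ln ((1 + cos th) / sin th)) / d.

Definition Ham (alpha d beta th W : R) : R :=
  Gth d beta th + alpha * sqrt beta / sqrt (D_beta d beta th W).

Lemma Gth_deriv d beta th : 0 < d -> 0 < sin th -> 0 < cos th ->
  is_derive (Gth d beta) th ((beta * sqrt beta * sin th - cos th) / (d * sin th * cos th)).
Proof.
  intros Hd Hs Hc. unfold Gth.
  auto_derive.
  - repeat split; try lra.
    + apply Rdiv_lt_0_compat; lra.
    + apply Rdiv_lt_0_compat; lra.
  - set (s := sin th) in *. set (c := cos th) in *.
    assert (E : s * s + c * c = 1) by (unfold s, c; pose proof (sin2_cos2 th); unfold Rsqr in H; lra).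
    clearbody s c.
    transitivity ((beta * sqrt beta * ((c*c + s*s + s)/(c*(1+s))) + (- (s*s + c*c + c)/(s*(1+c)))) / d).
    + field. repeat split; lra.
    + replace (c*c + s*s + s) with (1 + s) by lra. replace (s*s + c*c + c) with (1 + c) by lra.
      field. repeat split; lra.
Qed.

Lemma cons_deriv alpha d beta (th W : R -> R) t : 0 < d -> 1 <= beta ->
  0 < sin (th t) -> 0 < cos (th t) -> 0 < D_beta d beta (th t) (W t) ->
  is_derive th t (F1 alpha d beta (th t) (W t)) -> is_derive W t (F2 alpha d beta (th t) (W t)) ->
  is_derive (fun t => Ham alpha d beta (th t) (W t)) t 0.
Proof.
  intros Hd Hb Hs Hc HD Dth DW. unfold Ham.
  assert (DG : is_derive (fun t => Gth d beta (th t)) t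
     ((beta * sqrt beta * sin (th t) - cos (th t)) / (d * sin (th t) * cos (th t)) * F1 alpha d beta (th t) (W t))).
  { rewrite Rmult_comm. apply (is_derive_comp (Gth d beta) th t). apply Gth_deriv; auto. auto. }
  assert (DI : is_derive (fun t => alpha * sqrt beta / sqrt (D_beta d beta (th t) (W t))) t
     (- F1 alpha d beta (th t) (W t) * (beta * sqrt beta * sin (th t) - cos (th t)) / (d * sin (th t) * cos (th t)))).
  { assert (HD' := HD). unfold D_beta in HD'. unfold D_beta. auto_derive.
    - repeat split.
      + exists (F1 alpha d beta (th t) (W t)). exact Dth.
      + exists (F1 alpha d beta (th t) (W t)). exact Dth.
      + exists (F2 alpha d beta (th t) (W t)). exact DW.
      + apply (Rlt_le_trans _ _ _ HD'). apply Req_le. unfold Rdiv. ring.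
      + apply Rgt_not_eq, sqrt_lt_R0. apply (Rlt_le_trans _ _ _ HD'). apply Req_le. unfold Rdiv. ring.
    - replace (Derive (fun x => th x) t) with (F1 alpha d beta (th t) (W t))
        by (symmetry; apply is_derive_unique; exact Dth).
      replace (Derive (fun x => W x) t) with (F2 alpha d beta (th t) (W t))
        by (symmetry; apply is_derive_unique; exact DW).
      replace (d * (d * 1) / beta * ((sqrt beta * sin (th t) + - cos (th t)) *
        ((sqrt beta * sin (th t) + - cos (th t)) * 1)) + W t * (W t * 1))
        with (D_beta d beta (th t) (W t)) by (unfold D_beta, Rdiv; ring).
      rewrite sqrt_sqrt by lra.
      unfold F1, F2, D32.
      assert (Hq : 0 < sqrt (D_beta d beta (th t) (W t))) by (apply sqrt_lt_R0; auto).
      assert (Hsb : 0 < sqrt beta) by (apply sqrt_lt_R0; lra).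
      assert (Eb : beta = sqrt beta * sqrt beta) by (rewrite sqrt_sqrt; lra).
      set (q := sqrt (D_beta d beta (th t) (W t))) in *.
      set (DD := D_beta d beta (th t) (W t)) in *.
      set (sb := sqrt beta) in *.
      set (s := sin (th t)) in *. set (c := cos (th t)) in *. set (w := W t) in *.
      clearbody q DD sb s c w.
      rewrite Eb. field. repeat split; lra. }
  pose proof (is_derive_plus _ _ _ _ _ DG DI) as E.
  replace (0 : R) with (plus ((beta * sqrt beta * sin (th t) - cos (th t)) / (d * sin (th t) * cos (th t)) * F1 alpha d beta (th t) (W t))
     (- F1 alpha d beta (th t) (W t) * (beta * sqrt beta * sin (th t) - cos (th t)) / (d * sin (th t) * cos (th t)))).
  exact E.
  assert (Z : ((beta * sqrt beta * sin (th t) - cos (th t)) / (d * sin (th t) * cos (th t)) * F1 alpha d beta (th t) (W t))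
     + (- F1 alpha d beta (th t) (W t) * (beta * sqrt beta * sin (th t) - cos (th t)) / (d * sin (th t) * cos (th t))) = 0).
  { field. repeat split; lra. }
  exact Z.
Qed.

Lemma ln_nonneg x : 1 <= x -> 0 <= ln x.
Proof.
  intros H. destruct (Req_dec x 1). subst; rewrite ln_1; lra.
  rewrite <- ln_1. left. apply ln_increasing; lra.
Qed.

Lemma exp_mono x y : x <= y -> exp x <= exp y.
Proof. intros [H|H]. left; apply exp_increasing; auto. subst; lra. Qed.

Lemma ln_le_exp x y : 0 < x -> ln x <= y -> x <= exp y.
Proof. intros Hx H. rewrite <- (exp_ln x) by auto. apply exp_mono; auto. Qed.

Lemma sc_le1 th : sin th <= 1 /\ cos th <= 1.
Proof. pose proof (SIN_bound th). pose proof (COS_bound th). lra. Qed.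

Lemma level_bounds alpha d beta th W E : 0 < alpha -> 0 < d -> 1 <= beta ->
  0 < sin th -> 0 < cos th -> 0 < D_beta d beta th W -> Ham alpha d beta th W <= E ->
  / exp (d * E) <= sin th /\ / exp (d * E / (beta * sqrt beta)) <= cos th /\
  (alpha * sqrt beta / E) ^ 2 <= D_beta d beta th W /\ 0 < E.
Proof.
  intros Ha Hd Hb Hs Hc HD HE. unfold Ham, Gth in HE.
  destruct (sc_le1 th) as [Hs1 Hc1].
  assert (Hsb : 1 <= sqrt beta) by (rewrite <- sqrt_1; apply sqrt_le_1_alt; lra).
  assert (Hq : 0 < sqrt (D_beta d beta th W)) by (apply sqrt_lt_R0; auto).
  set (s := sin th) in *. set (c := cos th) in *. set (sb := sqrt beta) in *.
  set (q := sqrt (D_beta d beta th W)) in *.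
  assert (L1 : 0 <= ln ((1 + s) / c)).
  { apply ln_nonneg. apply (Rmult_le_reg_r c); auto. unfold Rdiv. rewrite Rmult_assoc, Rinv_l by lra. lra. }
  assert (L2 : 0 <= ln ((1 + c) / s)).
  { apply ln_nonneg. apply (Rmult_le_reg_r s); auto. unfold Rdiv. rewrite Rmult_assoc, Rinv_l by lra. lra. }
  assert (HI : 0 < alpha * sb / q) by (apply Rdiv_lt_0_compat; nra).
  assert (HG0 : 0 <= (beta * sb * ln ((1 + s) / c) + ln ((1 + c) / s)) / d).
  { apply Rdiv_le_0_compat; auto. assert (0 <= beta * sb) by nra. nra. }
  assert (HEp : 0 < E) by lra.
  set (G := (beta * sb * ln ((1 + s) / c) + ln ((1 + c) / s))) in *.
  assert (HGd : G <= d * E).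
  { assert (G / d <= E) by lra. apply (Rmult_le_compat_l d) in H; [|lra].
    replace (d * (G / d)) with G in H by (field; lra). exact H. }
  split; [|split; [|split]]; auto.
  - assert (ln ((1 + c) / s) <= d * E) by (unfold G in HGd; assert (0 <= beta * sb) by nra; nra).
    apply ln_le_exp in H; [|apply Rdiv_lt_0_compat; lra].
    assert (Ep : 0 < exp (d * E)) by apply exp_pos.
    apply (Rmult_le_reg_l (exp (d * E))); auto. rewrite Rinv_r by lra.
    apply (Rmult_le_compat_r s) in H; [|lra]. unfold Rdiv in H. rewrite Rmult_assoc, Rinv_l in H by lra. lra.
  - assert (Hbs : 1 <= beta * sb) by nra.
    assert (ln ((1 + s) / c) <= d * E / (beta * sb)).
    { apply (Rmult_le_reg_l (beta * sb)); [lra|]. replace (beta * sb * (d * E / (beta * sb))) with (d * E) by (field; lra).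
      unfold G in HGd. lra. }
    apply ln_le_exp in H; [|apply Rdiv_lt_0_compat; lra].
    assert (Ep : 0 < exp (d * E / (beta * sb))) by apply exp_pos.
    apply (Rmult_le_reg_l (exp (d * E / (beta * sb)))); auto. rewrite Rinv_r by lra.
    apply (Rmult_le_compat_r c) in H; [|lra]. unfold Rdiv in H. rewrite Rmult_assoc, Rinv_l in H by lra. lra.
  - assert (alpha * sb / q <= E) by lra.
    assert (alpha * sb / E <= q).
    { apply (Rmult_le_reg_r E); auto. unfold Rdiv. rewrite Rmult_assoc, Rinv_l, Rmult_1_r by lra.
      apply (Rmult_le_compat_r q) in H; [|lra]. unfold Rdiv in H. rewrite Rmult_assoc, Rinv_l, Rmult_1_r in H by lra. lra. }
    assert (0 <= alpha * sb / E) by (apply Rdiv_le_0_compat; nra).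
    assert (q * q = D_beta d beta th W) by (unfold q; apply sqrt_sqrt; lra).
    simpl. rewrite Rmult_1_r. rewrite <- H2. apply Rmult_le_compat; auto.
Qed.


Definition Dm d beta eta th W := Rmax (D_beta d beta th W) eta.

Definition MG1 alpha d beta eta th W :=
  alpha * sqrt beta * W * / Dm d beta eta th W * / sqrt (Dm d beta eta th W).

Definition MG2 alpha d beta sig kap eta th W :=
  (beta * sqrt beta * sin th - cos th) * (/ d * / Rmax (sin th) sig * / Rmax (cos th) kap)
  - alpha * d ^ 2 / sqrt beta * (sin th + sqrt beta * cos th) * (sqrt beta * sin th - cos th)
     * / Dm d beta eta th W * / sqrt (Dm d beta eta th W).

Lemma LLip_ext f g : (forall a b, f a b = g a b) -> LLip f -> LLip g.
Proof.
  intros E H Rb HR. destruct (H Rb HR) as [L [B [HL HH]]]. exists L, B. split; auto.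
  intros. rewrite <- !E. auto.
Qed.

Lemma LLip_D d beta : LLip (fun a b => D_beta d beta a b).
Proof.
  apply LLip_ext with (fun a b => d ^ 2 / beta * ((sqrt beta * sin a - cos a) * (sqrt beta * sin a - cos a)) + b * b).
  { intros. unfold D_beta. ring. }
  apply LLip_plus; [apply LLip_mult; [apply LLip_const|apply LLip_mult]|apply LLip_mult; apply LLip_snd];
  apply LLip_minus; try apply LLip_cos; apply LLip_mult; try apply LLip_const; apply LLip_sin.
Qed.

Lemma Dm_ge d beta eta th W : eta <= Dm d beta eta th W.
Proof. unfold Dm. apply Rmax_r. Qed.

Lemma LLip_Dm d beta eta : LLip (fun a b => Dm d beta eta a b).
Proof. unfold Dm. apply (LLip_max (fun a b => D_beta d beta a b)). apply LLip_D. Qed.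

Lemma LLip_MG1 alpha d beta eta : 0 < eta -> LLip (MG1 alpha d beta eta).
Proof.
  intros He. unfold MG1.
  apply LLip_mult; [apply LLip_mult; [apply LLip_mult; [apply LLip_const|apply LLip_snd]|]|].
  - apply (LLip_inv _ eta He). apply Dm_ge. apply LLip_Dm.
  - apply (LLip_inv _ (sqrt eta)). apply sqrt_lt_R0; auto.
    intros; apply sqrt_le_1_alt, Dm_ge.
    apply (LLip_sqrt _ eta He). apply Dm_ge. apply LLip_Dm.
Qed.

Lemma LLip_MG2 alpha d beta sig kap eta : 0 < sig -> 0 < kap -> 0 < eta ->
  LLip (MG2 alpha d beta sig kap eta).
Proof.
  intros Hs Hk He. unfold MG2.
  apply LLip_minus.
  - apply LLip_mult.
    + apply LLip_minus; [apply LLip_mult; [apply LLip_const|apply LLip_sin]|apply LLip_cos].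
    + apply LLip_mult; [apply LLip_mult; [apply LLip_const|]|].
      * apply (LLip_inv _ sig Hs). intros; apply Rmax_r. apply (LLip_max (fun a b => sin a)). apply LLip_sin.
      * apply (LLip_inv _ kap Hk). intros; apply Rmax_r. apply (LLip_max (fun a b => cos a)). apply LLip_cos.
  - apply LLip_mult; [apply LLip_mult; [apply LLip_mult; [apply LLip_mult; [apply LLip_const|]|]|]|].
    + apply LLip_plus; [apply LLip_sin|apply LLip_mult; [apply LLip_const|apply LLip_cos]].
    + apply LLip_minus; [apply LLip_mult; [apply LLip_const|apply LLip_sin]|apply LLip_cos].
    + apply (LLip_inv _ eta He). apply Dm_ge. apply LLip_Dm.
    + apply (LLip_inv _ (sqrt eta)). apply sqrt_lt_R0; auto.
      intros; apply sqrt_le_1_alt, Dm_ge.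
      apply (LLip_sqrt _ eta He). apply Dm_ge. apply LLip_Dm.
Qed.

Lemma abs_mult_le a b A B : Rabs a <= A -> Rabs b <= B -> Rabs (a * b) <= A * B.
Proof. intros. rewrite Rabs_mult. apply Rmult_le_compat; auto; apply Rabs_pos. Qed.

Lemma abs_inv_le x c : 0 < c -> c <= x -> Rabs (/ x) <= / c.
Proof. intros. rewrite Rabs_inv, Rabs_right by lra. apply Rinv_le_contravar; lra. Qed.

Lemma abs_sin_le a : Rabs (sin a) <= 1.
Proof. apply Rabs_le. pose proof (SIN_bound a). lra. Qed.
Lemma abs_cos_le a : Rabs (cos a) <= 1.
Proof. apply Rabs_le. pose proof (COS_bound a). lra. Qed.

Lemma abs_const_le c : Rabs c <= Rabs c.
Proof. lra. Qed.

Lemma D_ge_W2 d beta a b : 0 < beta -> b * b <= D_beta d beta a b.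
Proof.
  intros Hb. unfold D_beta.
  assert (0 <= d ^ 2 / beta * (sqrt beta * sin a - cos a) ^ 2).
  { apply Rmult_le_pos. apply Rdiv_le_0_compat; [apply pow2_ge_0|lra]. apply pow2_ge_0. }
  simpl. lra.
Qed.

Lemma W_le_sqrtDm d beta eta a b : 0 < beta -> Rabs b <= sqrt (Dm d beta eta a b).
Proof.
  intros Hb. rewrite <- sqrt_Rsqr_abs. apply sqrt_le_1_alt. unfold Dm.
  eapply Rle_trans; [|apply Rmax_l]. unfold Rsqr. apply D_ge_W2; auto.
Qed.

Lemma MG1_bound alpha d beta eta : 0 < alpha -> 1 <= beta -> 0 < eta ->
  forall a b, Rabs (MG1 alpha d beta eta a b) <= alpha * sqrt beta / eta.
Proof.
  intros Ha Hb He a b. unfold MG1.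
  assert (Hsb : 0 < sqrt beta) by (apply sqrt_lt_R0; lra).
  assert (Hq : 0 < sqrt (Dm d beta eta a b)) by (apply sqrt_lt_R0; pose proof (Dm_ge d beta eta a b); lra).
  pose proof (Dm_ge d beta eta a b).
  pose proof (W_le_sqrtDm d beta eta a b ltac:(lra)).
  set (q := sqrt (Dm d beta eta a b)) in *. set (D := Dm d beta eta a b) in *. clearbody q D.
  replace (alpha * sqrt beta * b * / D * / q) with ((alpha * sqrt beta) * (b / q) * / D) by (field; lra).
  replace (alpha * sqrt beta / eta) with ((alpha * sqrt beta) * 1 * / eta) by (field; lra).
  apply abs_mult_le; [apply abs_mult_le|].
  - rewrite Rabs_right by nra. lra.
  - unfold Rdiv. rewrite Rabs_mult, Rabs_inv, (Rabs_right q) by lra.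
    apply (Rmult_le_reg_r q); auto. rewrite Rmult_assoc, Rinv_l by lra. lra.
  - apply abs_inv_le; lra.
Qed.

Lemma MG2_bound alpha d beta sig kap eta : 0 < alpha -> 0 < d -> 1 <= beta -> 0 < sig -> 0 < kap -> 0 < eta ->
  forall a b, Rabs (MG2 alpha d beta sig kap eta a b) <=
    (beta * sqrt beta * 1 + 1) * (Rabs (/ d) * / sig * / kap)
    + Rabs (alpha * d ^ 2 / sqrt beta) * (1 + Rabs (sqrt beta) * 1) * (Rabs (sqrt beta) * 1 + 1) * / eta * / sqrt eta.
Proof.
  intros Ha Hd Hb Hs Hk He a b. unfold MG2.
  assert (Hsb : 0 < sqrt beta) by (apply sqrt_lt_R0; lra).
  assert (Hbsb : 0 <= beta * sqrt beta) by nra.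
  eapply Rle_trans; [apply Rabs_triang|]. rewrite Rabs_Ropp.
  apply Rplus_le_compat.
  - apply abs_mult_le.
    + eapply Rle_trans; [apply Rabs_triang|]. rewrite Rabs_Ropp. apply Rplus_le_compat.
      * apply abs_mult_le; [rewrite Rabs_right by lra; lra|apply abs_sin_le].
      * apply abs_cos_le.
    + apply abs_mult_le; [apply abs_mult_le|].
      * lra.
      * apply abs_inv_le; auto. apply Rmax_r.
      * apply abs_inv_le; auto. apply Rmax_r.
  - apply abs_mult_le; [apply abs_mult_le; [apply abs_mult_le; [apply abs_mult_le|]|]|].
    + lra.
    + eapply Rle_trans; [apply Rabs_triang|]. apply Rplus_le_compat. apply abs_sin_le.
      apply abs_mult_le. lra. apply abs_cos_le.
    + eapply Rle_trans; [apply Rabs_triang|]. rewrite Rabs_Ropp. apply Rplus_le_compat.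
      apply abs_mult_le. lra. apply abs_sin_le. apply abs_cos_le.
    + apply abs_inv_le; auto. apply Dm_ge.
    + apply abs_inv_le. apply sqrt_lt_R0; auto. apply sqrt_le_1_alt, Dm_ge.
Qed.

Lemma MG_Hyp alpha d beta sig kap eta : 0 < alpha -> 0 < d -> 1 <= beta -> 0 < sig -> 0 < kap -> 0 < eta ->
  exists M, Hyp (MG1 alpha d beta eta) (MG2 alpha d beta sig kap eta) M.
Proof.
  intros Ha Hd Hb Hs Hk He.
  set (M1 := alpha * sqrt beta / eta).
  set (M2 := (beta * sqrt beta * 1 + 1) * (Rabs (/ d) * / sig * / kap)
    + Rabs (alpha * d ^ 2 / sqrt beta) * (1 + Rabs (sqrt beta) * 1) * (Rabs (sqrt beta) * 1 + 1) * / eta * / sqrt eta).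
  assert (B1 := MG1_bound alpha d beta eta Ha Hb He).
  assert (B2 := MG2_bound alpha d beta sig kap eta Ha Hd Hb Hs Hk He).
  assert (P1 : 0 <= M1) by (specialize (B1 0 0); pose proof (Rabs_pos (MG1 alpha d beta eta 0 0)); unfold M1 in *; lra).
  assert (P2 : 0 <= M2) by (specialize (B2 0 0); pose proof (Rabs_pos (MG2 alpha d beta sig kap eta 0 0)); unfold M2 in *; lra).
  exists (M1 + M2). split; [lra|]. split; [apply LLip_MG1; auto|]. split; [apply LLip_MG2; auto|].
  split; intros a b; [specialize (B1 a b)|specialize (B2 a b)]; unfold M1, M2 in *; lra.
Qed.

Lemma MG_match alpha d beta sig kap eta th W : 0 < d -> 1 <= beta -> 0 < sig -> 0 < kap -> 0 < eta ->
  sig <= sin th -> kap <= cos th -> eta <= D_beta d beta th W ->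
  MG1 alpha d beta eta th W = F1 alpha d beta th W /\ MG2 alpha d beta sig kap eta th W = F2 alpha d beta th W.
Proof.
  intros Hd Hb Hs Hk He H1 H2 H3.
  assert (Hsb : 0 < sqrt beta) by (apply sqrt_lt_R0; lra).
  assert (Hq : 0 < sqrt (D_beta d beta th W)) by (apply sqrt_lt_R0; lra).
  unfold MG1, MG2, F1, F2, D32, Dm. rewrite (Rmax_left (sin th)), (Rmax_left (cos th)), Rmax_left by lra.
  split; field; repeat split; lra.
Qed.


Lemma D_nonneg d beta th W : 0 < beta -> 0 <= D_beta d beta th W.
Proof.
  intros Hb. unfold D_beta. apply Rplus_le_le_0_compat; [|apply pow2_ge_0].
  apply Rmult_le_pos. apply Rdiv_le_0_compat; [apply pow2_ge_0|lra]. apply pow2_ge_0.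
Qed.

Lemma Omega_D_pos d beta th W : 0 < d -> 1 <= beta -> in_Omega beta th W -> 0 < D_beta d beta th W.
Proof.
  intros Hd Hb [H1 [H2 H3]].
  assert (Hsb : 0 < sqrt beta) by (apply sqrt_lt_R0; lra).
  assert (Hc : 0 < cos th) by (apply cos_gt_0; lra).
  assert (Hk : 0 < d ^ 2 / beta) by (apply Rdiv_lt_0_compat; [apply pow_lt; lra|lra]).
  unfold D_beta.
  destruct (Req_dec W 0) as [HW|HW].
  - subst W. destruct (Req_dec (sqrt beta * sin th - cos th) 0) as [HX|HX].
    + exfalso. apply H3. split; auto. unfold theta_beta.
      rewrite <- (atan_tan th) by (split; lra). f_equal. unfold tan.
      field_simplify_eq; try lra.
    + assert (0 < (sqrt beta * sin th - cos th) ^ 2) by (apply pow2_gt_0; auto).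
      simpl. nra.
  - assert (0 < W ^ 2) by (apply pow2_gt_0; auto).
    assert (0 <= (sqrt beta * sin th - cos th) ^ 2) by apply pow2_ge_0. nra.
Qed.

Lemma D_pos_Omega d beta th W : 0 < d -> 1 <= beta -> 0 < th < PI / 2 -> 0 < D_beta d beta th W ->
  in_Omega beta th W.
Proof.
  intros Hd Hb Hth HD. split; [lra|]. split; [lra|]. intros [E1 E2]. subst W.
  assert (Hsb : 0 < sqrt beta) by (apply sqrt_lt_R0; lra).
  unfold theta_beta in E1. subst th.
  set (z := atan (/ sqrt beta)) in *.
  assert (Hc : 0 < cos z) by (apply cos_gt_0; lra).
  assert (T : sin z / cos z = / sqrt beta) by (apply tan_atan).
  assert (X : sqrt beta * sin z - cos z = 0).
  { apply (Rmult_eq_compat_l (sqrt beta * cos z)) in T.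
    replace (sqrt beta * cos z * (sin z / cos z)) with (sqrt beta * sin z) in T by (field; lra).
    replace (sqrt beta * cos z * / sqrt beta) with (cos z) in T by (field; lra). lra. }
  unfold D_beta in HD. rewrite X in HD. simpl in HD. lra.
Qed.

Lemma real_ind_fwd (P : R -> Prop) :
  (forall t, 0 <= t -> (forall s, 0 <= s < t -> P s) -> P t) ->
  (forall t, 0 <= t -> (forall s, 0 <= s <= t -> P s) -> exists e, 0 < e /\ forall s, t <= s < t + e -> P s) ->
  forall t, 0 <= t -> P t.
Proof.
  intros H1 H2 t1 Ht1. apply NNPP. intro Hn.
  set (A := fun u => 0 <= u /\ forall s, 0 <= s <= u -> P s).
  assert (P0 : P 0) by (apply H1; [lra|intros; lra]).
  assert (Hb : bound A).
  { exists t1. intros u [Hu Hs]. destruct (Rle_or_lt u t1); auto. exfalso. apply Hn. apply Hs. lra. }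
  assert (Hne : exists x, A x).
  { exists 0. split; [lra|]. intros s Hs. replace s with 0 by lra. auto. }
  destruct (completeness A Hb Hne) as [m [Hub Hlub]].
  assert (Hm0 : 0 <= m) by (apply Hub; split; [lra|]; intros s Hs; replace s with 0 by lra; auto).
  assert (Hlt : forall s, 0 <= s < m -> P s).
  { intros s Hs. apply NNPP. intro Hns.
    assert (m <= s). { apply Hlub. intros u [Hu Hu']. destruct (Rle_or_lt u s); auto.
      exfalso. apply Hns. apply Hu'. lra. }
    lra. }
  assert (Hle : forall s, 0 <= s <= m -> P s).
  { intros s Hs. destruct (Req_dec s m). subst s. apply H1; auto. apply Hlt; lra. }
  destruct (H2 m Hm0 Hle) as [e [He Hs]].
  assert (A (m + e / 2)).
  { split; [lra|]. intros s Hs'. destruct (Rle_or_lt s m). apply Hle; lra. apply Hs; lra. }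
  pose proof (Hub _ H). lra.
Qed.

Lemma real_ind (P : R -> Prop) :
  (forall t, (forall s, Rmin 0 t <= s <= Rmax 0 t -> s <> t -> P s) -> P t) ->
  (forall t, (forall s, Rmin 0 t <= s <= Rmax 0 t -> P s) -> exists e, 0 < e /\ forall s, Rabs (s - t) < e -> P s) ->
  forall t, P t.
Proof.
  intros H1 H2 t. destruct (Rle_or_lt 0 t).
  - apply real_ind_fwd; auto.
    + intros u Hu Hs. apply H1. intros s Hs' Hne. rewrite Rmin_left, Rmax_right in Hs' by lra. apply Hs; lra.
    + intros u Hu Hs. destruct (H2 u) as [e [He He']].
      { intros s Hs'. rewrite Rmin_left, Rmax_right in Hs' by lra. apply Hs; lra. }
      exists e. split; auto. intros s Hs'. apply He'. rewrite Rabs_right; lra.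
  - replace t with (- - t) by ring. apply (real_ind_fwd (fun u => P (- u))); [| |lra].
    + intros u Hu Hs. apply H1. intros s Hs' Hne. rewrite Rmin_right, Rmax_left in Hs' by lra.
      replace s with (- - s) by ring. apply Hs; lra.
    + intros u Hu Hs. destruct (H2 (- u)) as [e [He He']].
      { intros s Hs'. rewrite Rmin_right, Rmax_left in Hs' by lra. replace s with (- - s) by ring. apply Hs; lra. }
      exists e. split; auto. intros s Hs'. apply He'. rewrite Rabs_left1; lra.
Qed.

Lemma my_closed_ge (f : R -> R) t c : continuity_pt f t ->
  (forall del, 0 < del -> exists s, Rabs (s - t) < del /\ c <= f s) -> c <= f t.
Proof.
  intros Hf H. apply Rnot_lt_le. intro Hlt.
  destruct (Hf (c - f t)) as [del [Hdel Hd]]; [lra|].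
  destruct (H del Hdel) as [s [Hs Hcs]].
  destruct (Req_dec s t). subst; lra.
  assert (Hds := Hd s). simpl in Hds. unfold R_dist, D_x, no_cond in Hds.
  assert (Rabs (f s - f t) < c - f t) by (apply Hds; split; auto).
  apply Rabs_def2 in H1. lra.
Qed.

Lemma my_open_lt (f : R -> R) t c : continuity_pt f t -> c < f t ->
  exists e, 0 < e /\ forall s, Rabs (s - t) < e -> c < f s.
Proof.
  intros Hf H. destruct (Hf (f t - c)) as [del [Hdel Hd]]; [lra|].
  exists del. split; auto. intros s Hs. destruct (Req_dec s t). subst; lra.
  assert (Hds := Hd s). simpl in Hds. unfold R_dist, D_x, no_cond in Hds.
  assert (Rabs (f s - f t) < f t - c) by (apply Hds; split; auto).
  apply Rabs_def2 in H1. lra.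
Qed.


Lemma const_of_deriv0 (h : R -> R) t : (forall s, Rmin 0 t <= s <= Rmax 0 t -> derivable_pt_lim h s 0) -> h t = h 0.
Proof.
  intros H. destruct (Rtotal_order 0 t) as [Hp|[Hz|Hn]].
  - destruct (MVT_cor2 h (fun _ => 0) 0 t Hp) as [c [Hc _]].
    { intros c Hc. apply H. rewrite Rmin_left, Rmax_right; lra. }
    lra.
  - subst; auto.
  - destruct (MVT_cor2 h (fun _ => 0) t 0 Hn) as [c [Hc _]].
    { intros c Hc. apply H. rewrite Rmin_right, Rmax_left; lra. }
    lra.
Qed.

Lemma approx_pt t del : t <> 0 -> 0 < del -> exists s, Rmin 0 t <= s <= Rmax 0 t /\ s <> t /\ Rabs (s - t) < del.
Proof.
  intros Ht Hd. destruct (Rle_or_lt 0 t).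
  - assert (t > 0) by (destruct H; auto; subst; lra).
    exists (Rmax 0 (t - del / 2)). rewrite (Rmin_left 0 t), (Rmax_right 0 t) by lra.
    destruct (Rle_or_lt 0 (t - del / 2)).
    + rewrite Rmax_right by lra. split; [lra|]. split; [intro; lra|]. rewrite Rabs_left; lra.
    + rewrite Rmax_left by lra. split; [lra|]. split; [intro; lra|]. rewrite Rabs_left; lra.
  - exists (Rmin 0 (t + del / 2)). rewrite (Rmin_right 0 t), (Rmax_left 0 t) by lra.
    destruct (Rle_or_lt 0 (t + del / 2)).
    + rewrite Rmin_left by lra. split; [lra|]. split; [intro; lra|]. rewrite Rabs_right; lra.
    + rewrite Rmin_right by lra. split; [lra|]. split; [intro; lra|]. rewrite Rabs_right; lra.
Qed.

Lemma closed_reg (f : R -> R) c t : continuity_pt f t -> t <> 0 ->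
  (forall s, Rmin 0 t <= s <= Rmax 0 t -> s <> t -> c <= f s) -> c <= f t.
Proof.
  intros Hf Ht H. apply (my_closed_ge f t c Hf). intros del Hdel.
  destruct (approx_pt t del Ht Hdel) as [s [Hs [Hne Hd]]]. exists s. split; auto.
Qed.

Lemma cont_of_exd (f : R -> R) s : ex_derive f s -> continuity_pt f s.
Proof. intros H. pose proof (ex_derive_continuous f s H) as K. apply continuity_pt_filterlim. exact K. Qed.

Definition Reg d beta sig kap eta th W :=
  0 <= th <= PI / 2 /\ sig <= sin th /\ kap <= cos th /\ eta <= D_beta d beta th W.

Lemma Reg_strict d beta sig kap eta th W : 0 < sig -> 0 < kap -> 0 < eta ->
  Reg d beta sig kap eta th W -> 0 < th < PI / 2 /\ 0 < sin th /\ 0 < cos th /\ 0 < D_beta d beta th W.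
Proof.
  intros Hs Hk He [[H1 H2] [H3 [H4 H5]]]. repeat split; try lra.
  - destruct H1 as [H1|H1]; auto. subst th. rewrite sin_0 in H3. lra.
  - destruct H2 as [H2|H2]; auto. subst th. rewrite cos_PI2 in H4. lra.
Qed.

Theorem theorem1 (alpha d beta : R) (Halpha : 0 < alpha) (Hd : 0 < d) (Hbeta : 1 <= beta)
  (th0 W0 : R) (H0 : in_Omega beta th0 W0) :
  exists th W : R -> R,
    is_global_solution alpha d beta th0 W0 th W /\
    forall th' W' : R -> R, is_global_solution alpha d beta th0 W0 th' W' ->
      forall t, th' t = th t /\ W' t = W t.
Proof.
  assert (HD0 : 0 < D_beta d beta th0 W0) by (apply Omega_D_pos; auto).
  pose proof H0 as [Ht0a [Ht0b _]].
  assert (Hs0 : 0 < sin th0) by (apply sin_gt_0; lra).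
  assert (Hc0 : 0 < cos th0) by (apply cos_gt_0; lra).
  set (E := Ham alpha d beta th0 W0).
  destruct (level_bounds alpha d beta th0 W0 E Halpha Hd Hbeta Hs0 Hc0 HD0 (Rle_refl _)) as [B1 [B2 [B3 HE]]].
  set (s0 := / exp (d * E)) in *. set (c0 := / exp (d * E / (beta * sqrt beta))) in *.
  set (e0 := (alpha * sqrt beta / E) ^ 2) in *.
  assert (Hs0p : 0 < s0) by (apply Rinv_0_lt_compat, exp_pos).
  assert (Hc0p : 0 < c0) by (apply Rinv_0_lt_compat, exp_pos).
  assert (He0p : 0 < e0).
  { unfold e0. apply pow2_gt_0. apply Rgt_not_eq. apply Rdiv_lt_0_compat; auto.
    apply Rmult_lt_0_compat; auto. apply sqrt_lt_R0; lra. }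
  set (sig := s0 / 2). set (kap := c0 / 2). set (eta := e0 / 2).
  assert (Hsig : 0 < sig) by (unfold sig; lra). assert (Hkap : 0 < kap) by (unfold kap; lra).
  assert (Heta : 0 < eta) by (unfold eta; lra).
  set (G1 := MG1 alpha d beta eta). set (G2 := MG2 alpha d beta sig kap eta).
  destruct (MG_Hyp alpha d beta sig kap eta Halpha Hd Hbeta Hsig Hkap Heta) as [M HH].
  fold G1 G2 in HH.
  pose proof HH as [HM [HL1 [HL2 [HB1 HB2]]]].
  assert (LevReg : forall th W, 0 < th < PI / 2 -> 0 < D_beta d beta th W -> Ham alpha d beta th W = E ->
            Reg d beta sig kap eta th W /\ sig < sin th /\ kap < cos th /\ eta < D_beta d beta th W).
  { intros th W Hth HDp HHam.
    assert (0 < sin th) by (apply sin_gt_0; lra). assert (0 < cos th) by (apply cos_gt_0; lra).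
    destruct (level_bounds alpha d beta th W E Halpha Hd Hbeta H H1 HDp (Req_le _ _ HHam)) as [C1 [C2 [C3 _]]].
    fold s0 c0 e0 in C1, C2, C3. unfold Reg, sig, kap, eta. repeat split; lra. }
  assert (Match : forall th W, Reg d beta sig kap eta th W -> G1 th W = F1 alpha d beta th W /\ G2 th W = F2 alpha d beta th W).
  { intros th W [_ [R1 [R2 R3]]]. apply MG_match; auto. }
  assert (Cons : forall (x y : R -> R) t, x 0 = th0 -> y 0 = W0 ->
     (forall s, Rmin 0 t <= s <= Rmax 0 t -> (0 < sin (x s) /\ 0 < cos (x s) /\ 0 < D_beta d beta (x s) (y s)) /\
        derivable_pt_lim x s (F1 alpha d beta (x s) (y s)) /\ derivable_pt_lim y s (F2 alpha d beta (x s) (y s))) ->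
     Ham alpha d beta (x t) (y t) = E).
  { intros x y t Hx0 Hy0 Hr.
    assert (K := const_of_deriv0 (fun s => Ham alpha d beta (x s) (y s)) t).
    simpl in K. rewrite Hx0, Hy0 in K. apply K.
    intros s Hs. destruct (Hr s Hs) as [[P1 [P2 P3]] [Dx Dy]].
    apply is_derive_Reals. apply cons_deriv; auto; apply is_derive_Reals; auto. }
  destruct (picard_exists G1 G2 M th0 W0 HH) as [x [y [Hx0 [Hy0 [Lx [Ly Hint]]]]]].
  assert (Cg1 : forall u, continuous (fun s => G1 (x s) (y s)) u) by (apply comp_cont with M; auto).
  assert (Cg2 : forall u, continuous (fun s => G2 (x s) (y s)) u) by (apply comp_cont with M; auto).
  assert (Dx : forall t, derivable_pt_lim x t (G1 (x t) (y t))).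
  { apply (ode_deriv x (fun s => G1 (x s) (y s)) th0); auto. intro t; apply Hint. }
  assert (Dy : forall t, derivable_pt_lim y t (G2 (x t) (y t))).
  { apply (ode_deriv y (fun s => G2 (x s) (y s)) W0); auto. intro t; apply Hint. }
  assert (Ex : forall t, ex_derive x t) by (intro t; exists (G1 (x t) (y t)); apply is_derive_Reals; auto).
  assert (Ey : forall t, ex_derive y t) by (intro t; exists (G2 (x t) (y t)); apply is_derive_Reals; auto).
  assert (Cx : forall t, continuity_pt x t) by (intro t; apply cont_of_exd; auto).
  assert (Cpi : forall t, continuity_pt (fun s => PI / 2 - x s) t).
  { intro t. apply cont_of_exd. auto_derive. auto. }
  assert (Csin : forall t, continuity_pt (fun s => sin (x s)) t).
  { intro t. apply cont_of_exd. auto_derive. auto. }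
  assert (Ccos : forall t, continuity_pt (fun s => cos (x s)) t).
  { intro t. apply cont_of_exd. auto_derive. auto. }
  assert (CD : forall t, continuity_pt (fun s => D_beta d beta (x s) (y s)) t).
  { intro t. apply cont_of_exd. unfold D_beta. auto_derive. auto. }
  assert (Inv : forall t, Reg d beta sig kap eta (x t) (y t)).
  { apply real_ind.
    - intros t Ht. destruct (Req_dec t 0) as [Hz|Hnz].
      + subst t. rewrite Hx0, Hy0. unfold Reg, sig, kap, eta. repeat split; lra.
      + unfold Reg. repeat split.
        * apply (closed_reg x 0 t); auto. intros s Hs Hne. apply (Ht s Hs Hne).
        * assert (0 <= PI / 2 - x t); [|lra].
          apply (closed_reg (fun s => PI / 2 - x s) 0 t); auto. intros s Hs Hne. destruct (Ht s Hs Hne) as [[_ A] _]. lra.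
        * apply (closed_reg (fun s => sin (x s)) sig t); auto. intros s Hs Hne. apply (Ht s Hs Hne).
        * apply (closed_reg (fun s => cos (x s)) kap t); auto. intros s Hs Hne. apply (Ht s Hs Hne).
        * apply (closed_reg (fun s => D_beta d beta (x s) (y s)) eta t); auto. intros s Hs Hne. apply (Ht s Hs Hne).
    - intros t Ht.
      assert (Hreg : Reg d beta sig kap eta (x t) (y t)) by (apply Ht; split; [apply Rmin_r|apply Rmax_r]).
      destruct (Reg_strict d beta sig kap eta (x t) (y t) Hsig Hkap Heta Hreg) as [Q1 [Q2 [Q3 Q4]]].
      assert (HamE : Ham alpha d beta (x t) (y t) = E).
      { apply Cons; auto. intros s Hs. pose proof (Ht s Hs) as Rs. destruct (Match _ _ Rs) as [M1 M2].
        destruct (Reg_strict d beta sig kap eta (x s) (y s) Hsig Hkap Heta Rs) as [_ [P1 [P2 P3]]].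
        split; auto. rewrite <- M1, <- M2. auto. }
      destruct (LevReg (x t) (y t) Q1 Q4 HamE) as [_ [S1 [S2 S3]]].
      destruct (my_open_lt x t 0 (Cx t)) as [e1 [He1 O1]]; [lra|].
      destruct (my_open_lt (fun s => PI / 2 - x s) t 0 (Cpi t)) as [e2 [He2 O2]]; [lra|].
      destruct (my_open_lt (fun s => sin (x s)) t sig (Csin t)) as [e3 [He3 O3]]; [lra|].
      destruct (my_open_lt (fun s => cos (x s)) t kap (Ccos t)) as [e4 [He4 O4]]; [lra|].
      destruct (my_open_lt (fun s => D_beta d beta (x s) (y s)) t eta (CD t)) as [e5 [He5 O5]]; [lra|].
      exists (Rmin e1 (Rmin e2 (Rmin e3 (Rmin e4 e5)))). split.
      { repeat apply Rmin_pos; auto. }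
      intros s Hs.
      assert (Rmin e1 (Rmin e2 (Rmin e3 (Rmin e4 e5))) <= e1) by apply Rmin_l.
      assert (Rmin e1 (Rmin e2 (Rmin e3 (Rmin e4 e5))) <= e2) by (eapply Rle_trans; [apply Rmin_r|apply Rmin_l]).
      assert (Rmin e1 (Rmin e2 (Rmin e3 (Rmin e4 e5))) <= e3) by
        (eapply Rle_trans; [apply Rmin_r|]; eapply Rle_trans; [apply Rmin_r|apply Rmin_l]).
      assert (Rmin e1 (Rmin e2 (Rmin e3 (Rmin e4 e5))) <= e4) by
        (eapply Rle_trans; [apply Rmin_r|]; eapply Rle_trans; [apply Rmin_r|]; eapply Rle_trans; [apply Rmin_r|apply Rmin_l]).
      assert (Rmin e1 (Rmin e2 (Rmin e3 (Rmin e4 e5))) <= e5) by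
        (eapply Rle_trans; [apply Rmin_r|]; eapply Rle_trans; [apply Rmin_r|]; eapply Rle_trans; [apply Rmin_r|apply Rmin_r]).
      specialize (O1 s ltac:(lra)). specialize (O2 s ltac:(lra)). specialize (O3 s ltac:(lra)).
      specialize (O4 s ltac:(lra)). specialize (O5 s ltac:(lra)). simpl in *.
      unfold Reg. repeat split; lra. }
  assert (Fx : forall t, derivable_pt_lim x t (F1 alpha d beta (x t) (y t))).
  { intro t. destruct (Match _ _ (Inv t)) as [M1 _]. rewrite <- M1. auto. }
  assert (Fy : forall t, derivable_pt_lim y t (F2 alpha d beta (x t) (y t))).
  { intro t. destruct (Match _ _ (Inv t)) as [_ M2]. rewrite <- M2. auto. }
  exists x, y. split.
  - split; [|split; [|split; [|split; [|split; [|split]]]]]; auto.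
    + exists (fun t => G1 (x t) (y t)). split; auto. intro t. apply (proj2 (continuity_pt_filterlim _ t)). apply Cg1.
    + exists (fun t => G2 (x t) (y t)). split; auto. intro t. apply (proj2 (continuity_pt_filterlim _ t)). apply Cg2.
    + intro t. destruct (Reg_strict d beta sig kap eta (x t) (y t) Hsig Hkap Heta (Inv t)) as [Q1 [_ [_ Q4]]].
      apply (D_pos_Omega d); auto.
  - intros th' W' [_ [_ [HOm [Ht0 [HW0 [Dth DW]]]]]].
    assert (Inv' : forall t, Reg d beta sig kap eta (th' t) (W' t)).
    { intro t. assert (HO := HOm t). pose proof HO as [Oa [Ob _]].
      assert (HamE : Ham alpha d beta (th' t) (W' t) = E).
      { apply Cons; auto. intros s _. pose proof (HOm s) as [Sa [Sb _]].
        split; [|split; auto]. split; [apply sin_gt_0; lra|]. split; [apply cos_gt_0; lra|].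
        apply Omega_D_pos; auto. }
      assert (HDp : 0 < D_beta d beta (th' t) (W' t)) by (apply Omega_D_pos; auto).
      destruct (LevReg (th' t) (W' t) ltac:(lra) HDp HamE) as [RR _]. exact RR. }
    assert (D1 : forall t, derivable_pt_lim th' t (G1 (th' t) (W' t))).
    { intro t. destruct (Match _ _ (Inv' t)) as [M1 _]. rewrite M1. auto. }
    assert (D2 : forall t, derivable_pt_lim W' t (G2 (th' t) (W' t))).
    { intro t. destruct (Match _ _ (Inv' t)) as [_ M2]. rewrite M2. auto. }
    apply (uniq_ode G1 G2 M th' W' x y HH D1 D2 Dx Dy); congruence.
Qed.
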